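(* Let $G\in\mathrm{C}^1(\mathbb{R})$ be coercive and let $V\in\mathrm{Lip}(\mathbb{R})$ be $1$-periodic. For each $\theta\in\mathbb{R}$ there exist a unique $\overline{H}(\theta)\in\mathbb{R}$ and a unique $1$-periodic $f_\theta\in\mathrm{C}^1(\mathbb{R})$ such that $\int_0^1 f_\theta(x)\,dx=\theta$ and $$f_\theta'(x)+G(f_\theta(x))+V(x)=\overline{H}(\theta)\quad\text{for all }x\in\mathbb{R}.$$
   Context: $G$ coercive means $G(p)\to\infty$ as $p\to\pm\infty$. *)

(* Defs.v *)
From Stdlib Require Import Reals.
From Coquelicot Require Import Coquelicot.
Open Scope R_scope.

Definition is_C1 (f : R -> R) : Prop :=
  (forall x, ex_derive f x) /\ (forall x, continuous (Derive f) x).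

Definition coercive (G : R -> R) : Prop :=
  filterlim G (Rbar_locally p_infty) (Rbar_locally p_infty) /\
  filterlim G (Rbar_locally m_infty) (Rbar_locally p_infty).

Definition lipschitz (V : R -> R) : Prop :=
  exists L : R, forall x y, Rabs (V x - V y) <= L * Rabs (x - y).

Definition periodic1 (f : R -> R) : Prop := forall x, f (x + 1) = f x.

Definition cell_solution (G V : R -> R) (theta H : R) (f : R -> R) : Prop :=
  is_C1 f /\ periodic1 f /\ RInt f 0 1 = theta /\
  (forall x, Derive f x + G (f x) + V x = H).

(* Main.v *)
Require Import Defs.
From Stdlib Require Import Reals Lra Psatz ClassicalEpsilon FunctionalExtensionality Classical.
From Coquelicot Require Import Coquelicot.
Open Scope R_scope.

Lemma local_sign f x l : is_derive f x l -> 0 < l ->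
  exists d, 0 < d /\ (forall y, x < y < x + d -> f x < f y) /\
                     (forall y, x - d < y < x -> f y < f x).
Proof.
intros Hd Hl. apply is_derive_Reals in Hd.
destruct (Hd l Hl) as [[d dpos] Hdd]. simpl in Hdd.
exists d; split; [lra|split].
- intros y Hy. specialize (Hdd (y - x) ltac:(lra)).
  rewrite Rabs_pos_eq in Hdd by lra. specialize (Hdd ltac:(lra)).
  replace (x + (y - x)) with y in Hdd by ring.
  apply Rabs_def2 in Hdd. destruct Hdd as [_ H2].
  assert (0 < (f y - f x) / (y - x)) by lra.
  assert (0 < (f y - f x)). { 
    replace (f y - f x) with ((f y - f x) / (y - x) * (y - x)) by (field; lra).
    apply Rmult_lt_0_compat; lra. }
  lra.
- intros y Hy. specialize (Hdd (y - x) ltac:(lra)).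
  rewrite Rabs_left in Hdd by lra. specialize (Hdd ltac:(lra)).
  replace (x + (y - x)) with y in Hdd by ring.
  apply Rabs_def2 in Hdd. destruct Hdd as [_ H2].
  assert (0 < (f y - f x) / (y - x)) by lra.
  assert (0 < (f x - f y)). { 
    replace (f x - f y) with ((f y - f x) / (y - x) * (x - y)) by (field; lra).
    apply Rmult_lt_0_compat; lra. }
  lra.
Qed.

Lemma local_sign_neg f x l : is_derive f x l -> l < 0 ->
  exists d, 0 < d /\ (forall y, x < y < x + d -> f y < f x) /\
                     (forall y, x - d < y < x -> f x < f y).
Proof.
intros Hd Hl.
assert (H: is_derive (fun t => - f t) x (- l)).
{ apply (is_derive_opp f x l) in Hd. exact Hd. }
destruct (local_sign _ _ _ H ltac:(lra)) as [d [dp [H1 H2]]].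
exists d; split; [lra|split]; intros y Hy; [specialize (H1 y Hy)|specialize (H2 y Hy)]; lra.
Qed.

Lemma cont_pt_of_continuous f x : continuous f x -> continuity_pt f x.
Proof. intros H; apply continuity_pt_filterlim; exact H. Qed.

Lemma first_zero (d : R -> R) a b :
  (forall x, continuous d x) -> a < b -> 0 < d a -> d b <= 0 ->
  exists s, a < s <= b /\ d s = 0 /\ (forall z, a <= z < s -> 0 < d z).
Proof.
intros Hc Hab Ha Hb.
set (E := fun y => a <= y <= b /\ forall z, a <= z <= y -> 0 < d z).
assert (HE : bound E). { exists b; intros y [Hy _]; lra. }
assert (HE2 : exists x, E x). { exists a; split; [lra|]; intros z Hz; replace z with a by lra; auto. }
destruct (completeness E HE HE2) as [s [Hub Hlub]].
assert (Has : a <= s). { apply Hub; split; [lra|]; intros z Hz; replace z with a by lra; auto. }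
assert (Hsb : s <= b). { apply Hlub; intros y [Hy _]; lra. }
assert (Hbelow : forall z, a <= z < s -> 0 < d z).
{ intros z Hz. destruct (Rle_or_lt (d z) 0) as [Hdz|Hdz]; auto.
  exfalso. assert (is_upper_bound E z).
  { intros y [Hy1 Hy2]. destruct (Rle_or_lt y z) as [|Hzy]; auto.
    specialize (Hy2 z ltac:(lra)). lra. }
  specialize (Hlub z H). lra. }
assert (Hcs := cont_pt_of_continuous _ _ (Hc s)).
destruct (Rtotal_order (d s) 0) as [Hneg|[Hz|Hpos]].
- exfalso.
  destruct (Hcs (- d s) ltac:(lra)) as [del [Hdel Hdd]].
  assert (Has' : a < s). { destruct Has as [|Heq]; auto. subst s; lra. }
  set (z := Rmax a (s - del/2)).
  assert (a <= z < s). { unfold z; unfold Rmax; destruct Rle_dec; lra. }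
  specialize (Hbelow z H).
  specialize (Hdd z). simpl in Hdd. unfold R_dist in Hdd.
  assert (Rabs (z - s) < del). { rewrite Rabs_left by lra. unfold z, Rmax; destruct Rle_dec; lra. }
  assert (Hzz: Rabs (d z - d s) < - d s). { apply Hdd. split; auto. unfold D_x, no_cond; split; auto. lra. }
  apply Rabs_def2 in Hzz. lra.
- exists s; repeat split; auto.
  destruct Has as [|Heq]; auto. subst s; lra.
- exfalso.
  destruct (Hcs (d s) ltac:(lra)) as [del [Hdel Hdd]].
  assert (Hsb' : s < b). { destruct Hsb as [|Heq]; auto. subst s; lra. }
  set (y := Rmin b (s + del/2)).
  assert (Ey : E y).
  { split. { unfold y, Rmin; destruct Rle_dec; lra. }
    intros z Hz. destruct (Rlt_or_le z s) as [Hzs|Hzs].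
    - apply Hbelow; lra.
    - specialize (Hdd z). simpl in Hdd. unfold R_dist in Hdd.
      destruct (Req_dec z s) as [->|Hne]; [lra|].
      assert (Rabs (z - s) < del). { rewrite Rabs_pos_eq by lra. unfold y, Rmin in Hz; destruct Rle_dec in Hz; lra. }
      assert (Hzz: Rabs (d z - d s) < d s). { apply Hdd. split; auto. unfold D_x, no_cond; split; auto. }
      apply Rabs_def2 in Hzz. lra. }
  specialize (Hub y Ey). unfold y, Rmin in Hub; destruct Rle_dec in Hub; lra.
Qed.

Lemma deriv_cont (d D : R -> R) : (forall x, is_derive d x (D x)) -> forall x, continuous d x.
Proof. intros Hd x. apply (ex_derive_continuous (K:=R_AbsRing) (V:=R_NormedModule)). exists (D x). apply Hd. Qed.

Lemma crossing (d D : R -> R) x0 :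
  (forall x, is_derive d x (D x)) -> (forall x, d x = 0 -> 0 < D x) ->
  d x0 = 0 -> forall x, x0 < x -> 0 < d x.
Proof.
intros Hd HD H0 x1 Hx1.
destruct (Rlt_or_le 0 (d x1)) as [|Hle]; auto. exfalso.
assert (Hc := deriv_cont d D Hd).
destruct (local_sign _ _ _ (Hd x0) (HD x0 H0)) as [del [Hdel [Hr _]]].
set (x2 := x0 + Rmin del (x1 - x0) / 2).
assert (x0 < x2 < x1 /\ x2 < x0 + del). { unfold x2, Rmin; destruct Rle_dec; lra. }
assert (0 < d x2). { rewrite <- H0. apply Hr. lra. }
destruct (first_zero d x2 x1 Hc ltac:(lra) H1 Hle) as [s [Hs [Hds Hbel]]].
destruct (local_sign _ _ _ (Hd s) (HD s Hds)) as [del' [Hdel' [_ Hl]]].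
set (z := Rmax x2 (s - del'/2)).
assert (x2 <= z < s /\ s - del' < z). { unfold z, Rmax; destruct Rle_dec; lra. }
specialize (Hbel z ltac:(lra)). specialize (Hl z ltac:(lra)). lra.
Qed.

Lemma is_derive_ok (f : R -> R) x l : is_derive f x l -> ex_derive f x /\ Derive f x = l.
Proof. intros H; split; [exists l; exact H| apply is_derive_unique; exact H]. Qed.

Lemma nonincr_mvt (w Dw : R -> R) a b : a <= b ->
  (forall x, is_derive w x (Dw x)) -> (forall x, a <= x <= b -> Dw x <= 0) -> w b <= w a.
Proof.
intros Hab Hd Hn.
destruct (MVT_gen w a b Dw) as [c [Hc Heq]].
- intros x Hx; apply Hd.
- intros x Hx. apply continuity_pt_filterlim.
  apply (ex_derive_continuous (K:=R_AbsRing) (V:=R_NormedModule)). exists (Dw x); apply Hd.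
- rewrite Rmin_left in Hc by lra. rewrite Rmax_right in Hc by lra.
  specialize (Hn c Hc). assert (Dw c * (b - a) <= 0).
  { apply Rmult_le_0_r; lra. } lra.
Qed.

Lemma gronwall_fwd (y1 y2 D1 D2 : R -> R) L eps x0 x1 :
  (forall x, is_derive y1 x (D1 x)) -> (forall x, is_derive y2 x (D2 x)) ->
  0 <= L -> 0 <= eps <= 1 -> x0 <= x1 ->
  (forall x, x0 <= x <= x1 -> Rabs (D1 x - D2 x) <= L * Rabs (y1 x - y2 x) + eps) ->
  (y1 x1 - y2 x1)^2 <= ((y1 x0 - y2 x0)^2 + eps) * exp ((2*L+1)*(x1 - x0)).
Proof.
intros H1 H2 HL He Hx Hb.
set (k := 2*L+1).
set (w := fun x => exp (-(k*(x-x0))) * ((y1 x - y2 x)^2 + eps)).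
set (Dw := fun x => exp (-(k*(x-x0))) * (-k * ((y1 x - y2 x)^2 + eps) + 2*(y1 x - y2 x)*(D1 x - D2 x))).
assert (Hw : forall x, is_derive w x (Dw x)).
{ intros x. unfold w, Dw.
  destruct (is_derive_ok _ _ _ (H1 x)) as [E1 R1].
  destruct (is_derive_ok _ _ _ (H2 x)) as [E2 R2].
  auto_derive; auto.
  replace (Derive (fun x2 : R => y1 x2) x) with (D1 x) by (symmetry; exact R1).
  replace (Derive (fun x2 : R => y2 x2) x) with (D2 x) by (symmetry; exact R2). unfold Rminus. simpl. ring. }
assert (Hle : w x1 <= w x0).
{ apply (nonincr_mvt w Dw); auto. intros x Hxx. unfold Dw.
  rewrite <- (Rmult_0_r (exp (-(k*(x-x0))))). apply Rmult_le_compat_l.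
  { apply Rlt_le, exp_pos. }
  specialize (Hb x Hxx). set (d := y1 x - y2 x) in *. set (e := D1 x - D2 x) in *.
  assert (2*d*e <= 2*Rabs d * Rabs e).
  { pose proof (Rle_abs (d*e)). rewrite Rabs_mult in H. lra. }
  assert (Rabs d * Rabs e <= Rabs d * (L * Rabs d + eps)).
  { apply Rmult_le_compat_l; auto. apply Rabs_pos. }
  assert (Rabs d * Rabs d = d^2). { rewrite <- Rabs_mult. rewrite Rabs_pos_eq. ring. nra. }
  assert (0 <= Rabs d) by apply Rabs_pos.
  assert (2*eps*Rabs d <= eps*(d^2+1)).
  { assert (0 <= eps * (Rabs d - 1)^2) by (apply Rmult_le_pos; [lra| apply pow2_ge_0]). nra. }
  assert (eps * d^2 <= d^2) by (assert (0 <= d^2) by apply pow2_ge_0; nra).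
  unfold k. nra. }
unfold w in Hle. replace (x0 - x0) with 0 in Hle by ring.
rewrite Rmult_0_r, Ropp_0, exp_0, Rmult_1_l in Hle.
assert (Hexp : exp (-(k*(x1-x0))) * exp (k*(x1-x0)) = 1).
{ rewrite <- exp_plus. replace (-(k*(x1-x0)) + k*(x1-x0)) with 0 by ring. apply exp_0. }
assert (0 < exp (k*(x1-x0))) by apply exp_pos.
fold k.
apply Rmult_le_compat_r with (r := exp (k*(x1-x0))) in Hle; [|lra].
replace (exp (- (k * (x1 - x0))) * ((y1 x1 - y2 x1) ^ 2 + eps) * exp (k * (x1 - x0)))
  with ((y1 x1 - y2 x1) ^ 2 + eps) in Hle.
- lra.
- transitivity (((y1 x1 - y2 x1) ^ 2 + eps) * (exp (- (k * (x1 - x0))) * exp (k * (x1 - x0)))).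
  + rewrite Hexp; ring.
  + ring.
Qed.

Lemma cont_of_eps (f : R -> R) x :
  (forall eps, 0 < eps -> exists del, 0 < del /\ forall z, Rabs (z - x) < del -> Rabs (f z - f x) < eps) ->
  continuous f x.
Proof.
intros H. apply continuity_pt_filterlim.
unfold continuity_pt, continue_in, limit1_in, limit_in. simpl. unfold R_dist.
intros eps Heps. destruct (H eps Heps) as [del [Hd Hz]]. exists del; split; auto.
intros z [_ Hz']. apply Hz; auto.
Qed.

Lemma eps_of_cont (f : R -> R) x : continuous f x ->
  forall eps, 0 < eps -> exists del, 0 < del /\ forall z, Rabs (z - x) < del -> Rabs (f z - f x) < eps.
Proof.
intros H. apply continuity_pt_filterlim in H.
unfold continuity_pt, continue_in, limit1_in, limit_in in H. simpl in H. unfold R_dist in H.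
intros eps Heps. destruct (H eps Heps) as [del [Hd Hz]]. exists del; split; auto.
intros z Hz'. destruct (Req_dec z x) as [->|Hne].
- rewrite Rminus_diag, Rabs_R0; auto.
- apply Hz; split; auto. split; auto. exact I.
Qed.

Lemma le_geom a b c : (forall n, a <= b + c * (/2)^n) -> a <= b.
Proof.
intros H. destruct (Rle_or_lt a b) as [|Hlt]; auto. exfalso.
assert (Hc : 0 < c). { specialize (H 0%nat). simpl in H. lra. }
destruct (pow_lt_1_zero (/2) ltac:(rewrite Rabs_pos_eq; lra) ((a - b)/c)) as [N HN].
{ apply Rdiv_lt_0_compat; lra. }
specialize (HN N (le_n _)). specialize (H N).
rewrite Rabs_pos_eq in HN by (apply pow_le; lra).
apply Rmult_lt_compat_l with (r := c) in HN; auto.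
replace (c * ((a - b)/c)) with (a - b) in HN by (field; lra). lra.
Qed.

Lemma nonincr_mvt' (w Dw : R -> R) a b : a <= b ->
  (forall x, is_derive w x (Dw x)) -> (forall x, a <= x <= b -> Dw x <= 0) -> w b <= w a.
Proof.
intros Hab Hd Hn.
destruct (MVT_gen w a b Dw) as [c [Hc Heq]].
- intros x Hx; apply Hd.
- intros x Hx. apply continuity_pt_filterlim.
  apply (ex_derive_continuous (K:=R_AbsRing) (V:=R_NormedModule)). exists (Dw x); apply Hd.
- rewrite Rmin_left in Hc by lra. rewrite Rmax_right in Hc by lra.
  specialize (Hn c Hc). assert (Dw c * (b - a) <= 0).
  { apply Rmult_le_0_r; lra. } lra.
Qed.

Lemma compare_exp (h Dh : R -> R) K c :
  0 <= c -> h 0 = 0 -> (forall x, is_derive h x (Dh x)) ->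
  (forall x, Rabs (Dh x) <= K * c * exp (c * Rabs x)) ->
  forall x, Rabs (h x) <= K * (exp (c * Rabs x) - 1).
Proof.
intros Hc H0 Hd Hb x.
destruct (Rle_or_lt 0 x) as [Hx|Hx].
- rewrite (Rabs_pos_eq x) by lra.
  assert (E1 : forall s, -1 <= s <= 1 -> s * h x <= K * (exp (c*x) - 1)).
  { intros s Hs.
    pose (w := fun t => s * h t - K * (exp (c*t) - 1)).
    assert (Hw : forall t, is_derive w t (s * Dh t - K * (c * exp (c*t)))).
    { intros t. unfold w. destruct (is_derive_ok _ _ _ (Hd t)) as [E1 R1].
      auto_derive; auto. replace (Derive (fun x0 : R => h x0) t) with (Dh t) by (symmetry; exact R1). ring. }
    assert (w x <= w 0).
    { apply (nonincr_mvt' w _ 0 x Hx Hw). intros t Ht. specialize (Hb t).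
      rewrite (Rabs_pos_eq t) in Hb by lra.
      assert (s * Dh t <= Rabs (Dh t)).
      { destruct (Rle_or_lt 0 (Dh t)).
        - rewrite Rabs_pos_eq by lra. nra.
        - rewrite Rabs_left by lra. nra. }
      lra. }
    unfold w in H. rewrite H0, Rmult_0_r in H. rewrite Rmult_0_r, exp_0 in H. lra. }
  apply Rabs_le. pose proof (E1 1 ltac:(lra)). pose proof (E1 (-1) ltac:(lra)). lra.
- rewrite (Rabs_left x) by lra.
  assert (E1 : forall s, -1 <= s <= 1 -> s * h x <= K * (exp (c * - x) - 1)).
  { intros s Hs.
    pose (w := fun t => K * (exp (c* - t) - 1) - s * h t).
    assert (Hw : forall t, is_derive w t (K * (- c * exp (c* - t)) - s * Dh t)).
    { intros t. unfold w. destruct (is_derive_ok _ _ _ (Hd t)) as [E1 R1].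
      auto_derive; auto. replace (Derive (fun x0 : R => h x0) t) with (Dh t) by (symmetry; exact R1). ring. }
    assert (w 0 <= w x).
    { apply (nonincr_mvt' w _ x 0 ltac:(lra) Hw). intros t Ht. specialize (Hb t).
      rewrite (Rabs_left1 t) in Hb by lra.
      assert (- (s * Dh t) <= Rabs (Dh t)).
      { destruct (Rle_or_lt 0 (Dh t)).
        - rewrite Rabs_pos_eq by lra. nra.
        - rewrite Rabs_left by lra. nra. }
      lra. }
    unfold w in H. rewrite H0, Ropp_0, Rmult_0_r, exp_0 in H. lra. }
  apply Rabs_le. pose proof (E1 1 ltac:(lra)). pose proof (E1 (-1) ltac:(lra)). lra.
Qed.

Definition ode_ok (F : R -> R -> R) (L : R) :=
  0 < L /\ (forall x y z, Rabs (F x y - F x z) <= L * Rabs (y - z)) /\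
  (forall u, (forall x, continuous u x) -> forall x, continuous (fun t => F t (u t)) x) /\
  (forall y, exists B, forall x, Rabs (F x y) <= B).

Fixpoint pic (F : R -> R -> R) (a : R) (n : nat) : R -> R :=
  match n with
  | O => fun _ => a
  | S m => fun x => a + RInt (fun t => F t (pic F a m t)) 0 x
  end.

Lemma is_derive_Rminus (f g : R -> R) x df dg :
  is_derive f x df -> is_derive g x dg -> is_derive (fun t => f t - g t) x (df - dg).
Proof. intros H1 H2. exact (is_derive_minus (K:=R_AbsRing) (V:=R_NormedModule) f g x df dg H1 H2). Qed.

Lemma is_derive_addc (f : R -> R) a x l : is_derive f x l -> is_derive (fun t => a + f t) x l.
Proof.
intros H. pose proof (is_derive_plus (K:=R_AbsRing) (V:=R_NormedModule) (fun _ => a) f x zero l (is_derive_const a x) H) as H2.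
rewrite plus_zero_l in H2. exact H2.
Qed.

Lemma is_derive_constR (a x : R) : is_derive (fun _ : R => a) x 0.
Proof. exact (is_derive_const (K:=R_AbsRing) (V:=R_NormedModule) a x). Qed.

Lemma is_derive_RInt0 (g : R -> R) x : (forall t, continuous g t) ->
  is_derive (fun b => RInt g 0 b) x (g x).
Proof.
intros Hg. apply (is_derive_RInt g (fun b => RInt g 0 b) 0 x).
- exists (mkposreal 1 Rlt_0_1). intros b _. apply (RInt_correct (V:=R_CompleteNormedModule)), (ex_RInt_continuous (V:=R_CompleteNormedModule)). intros; apply Hg.
- apply Hg.
Qed.

Lemma pic_deriv_step F L a n : ode_ok F L -> (forall x, continuous (pic F a n) x) ->
  forall x, is_derive (pic F a (S n)) x (F x (pic F a n x)).
Proof.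
intros [_ [_ [Hc _]]] Hn x. simpl. apply is_derive_addc.
apply (is_derive_RInt0 (fun t => F t (pic F a n t))). apply Hc; auto.
Qed.

Lemma pic_cont F L a n : ode_ok F L -> forall x, continuous (pic F a n) x.
Proof.
intros HF. induction n as [|n IH]; intros x.
- simpl. apply continuous_const.
- apply (ex_derive_continuous (K:=R_AbsRing) (V:=R_NormedModule)).
  eexists. apply (pic_deriv_step F L a n HF IH).
Qed.

Lemma pic_deriv F L a n : ode_ok F L ->
  forall x, is_derive (pic F a (S n)) x (F x (pic F a n x)).
Proof. intros HF. apply (pic_deriv_step F L a n HF (pic_cont F L a n HF)). Qed.

Lemma pic_0 F a n : pic F a n 0 = a.
Proof. destruct n; simpl; auto. rewrite RInt_point. unfold zero; simpl. ring. Qed.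

Lemma exp_ge1 c x : 0 <= c -> 1 <= exp (c * Rabs x).
Proof.
intros Hc. rewrite <- exp_0. destruct (Req_dec (c * Rabs x) 0) as [->|Hne]; [lra|].
left. apply exp_increasing. assert (0 <= c * Rabs x) by (apply Rmult_le_pos; auto; apply Rabs_pos). lra.
Qed.

Lemma delta_bound F L a B0 : ode_ok F L -> (forall x, Rabs (F x a) <= B0) ->
  forall n x, Rabs (pic F a (S n) x - pic F a n x) <= B0 / (2*L) * (/2)^n * (exp (2*L * Rabs x) - 1).
Proof.
intros HF HB0. pose proof HF as [HL [HLip _]].
assert (HB0p : 0 <= B0). { specialize (HB0 0). pose proof (Rabs_pos (F 0 a)). lra. }
induction n as [|n IH]; intros x.
- apply (compare_exp (fun t => pic F a 1 t - pic F a 0 t) (fun t => F t a - 0)).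
  + lra.
  + rewrite !pic_0. ring.
  + intros t. apply is_derive_Rminus. apply (pic_deriv F L a 0 HF). simpl. apply is_derive_constR.
  + intros t. rewrite Rminus_0_r. pose proof (exp_ge1 (2*L) t ltac:(lra)).
    simpl. replace (B0 / (2 * L) * 1 * (2 * L)) with B0 by (field; lra).
    specialize (HB0 t). nra.
- apply (compare_exp (fun t => pic F a (S (S n)) t - pic F a (S n) t)
           (fun t => F t (pic F a (S n) t) - F t (pic F a n t))).
  + lra.
  + rewrite !pic_0. ring.
  + intros t. apply is_derive_Rminus; apply (pic_deriv F L a _ HF).
  + intros t. eapply Rle_trans. apply HLip.
    eapply Rle_trans. apply Rmult_le_compat_l. lra. apply IH.
    assert (0 <= B0 / (2*L)) by (apply Rdiv_le_0_compat; lra).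
    assert (0 <= (/2)^n) by (apply pow_le; lra).
    pose proof (exp_ge1 (2*L) t ltac:(lra)).
    simpl. replace (B0 / (2 * L) * (/ 2 * (/ 2) ^ n) * (2 * L)) with (B0/(2*L) * (/2)^n * L) by (field; lra).
    assert (0 <= B0 / (2*L) * (/2)^n) by (apply Rmult_le_pos; auto).
    nra.
Qed.

Lemma pic_cauchy F L a B0 : ode_ok F L -> (forall x, Rabs (F x a) <= B0) ->
  forall n m x, (n <= m)%nat ->
  Rabs (pic F a m x - pic F a n x) <= 2 * (B0/(2*L)) * exp (2*L*Rabs x) * (/2)^n.
Proof.
intros HF HB0 n m x Hnm. pose proof HF as [HL _].
assert (HB0p : 0 <= B0). { specialize (HB0 0). pose proof (Rabs_pos (F 0 a)). lra. }
assert (Hb : 0 <= B0/(2*L)) by (apply Rdiv_le_0_compat; lra).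
set (Bb := B0/(2*L)) in *. set (E := exp (2*L*Rabs x)).
assert (HE : 1 <= E) by (apply exp_ge1; lra).
assert (H : forall k, Rabs (pic F a (n+k) x - pic F a n x) <= 2 * Bb * E * ((/2)^n - (/2)^(n+k))).
{ induction k as [|k IH].
  - rewrite Nat.add_0_r, Rminus_diag, Rabs_R0, Rminus_diag, Rmult_0_r. lra.
  - rewrite Nat.add_succ_r.
    replace (pic F a (S (n + k)) x - pic F a n x) with
      ((pic F a (S (n + k)) x - pic F a (n+k) x) + (pic F a (n + k) x - pic F a n x)) by ring.
    eapply Rle_trans. apply Rabs_triang.
    pose proof (delta_bound F L a B0 HF HB0 (n+k) x). fold Bb E in H.
    assert (0 <= Bb * (/2)^(n+k)) by (apply Rmult_le_pos; auto; apply pow_le; lra).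
    change ((/2)^(S (n+k))) with (/2 * (/2)^(n+k)).
    set (p := (/2)^(n+k)) in *.
    assert (Bb * p * (E - 1) <= Bb * p * E) by nra.
    assert (2 * Bb * E * ((/ 2) ^ n - / 2 * p) = 2 * Bb * E * ((/ 2) ^ n - p) + Bb * p * E) by field.
    lra. }
replace m with (n + (m - n))%nat by lia.
eapply Rle_trans. apply H.
assert (0 <= (/2)^(n + (m-n))) by (apply pow_le; lra).
assert (0 <= Bb * E) by (apply Rmult_le_pos; lra). nra.
Qed.

Definition ysol F a x := real (Lim_seq (fun n => pic F a n x)).

Lemma geom_small c eps : 0 < eps -> exists N, c * (/2)^N < eps.
Proof.
intros He. destruct (Rle_or_lt c 0) as [Hc|Hc].
- exists 0%nat. simpl. lra.
- destruct (pow_lt_1_zero (/2) ltac:(rewrite Rabs_pos_eq; lra) (eps/c)) as [N HN].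
  { apply Rdiv_lt_0_compat; lra. }
  exists N. specialize (HN N (le_n _)). rewrite Rabs_pos_eq in HN by (apply pow_le; lra).
  apply Rmult_lt_compat_l with (r := c) in HN; auto.
  replace (c * (eps/c)) with eps in HN by (field; lra). lra.
Qed.

Lemma ysol_lim F L a B0 : ode_ok F L -> (forall x, Rabs (F x a) <= B0) ->
  forall x, is_lim_seq (fun n => pic F a n x) (ysol F a x).
Proof.
intros HF HB0 x.
assert (Hex : ex_finite_lim_seq (fun n => pic F a n x)).
{ apply ex_lim_seq_cauchy_corr. intros [eps Heps]. simpl.
  destruct (geom_small (2 * 2 * (B0/(2*L)) * exp (2*L*Rabs x)) eps Heps) as [N HN].
  exists N. intros n m Hn Hm.
  pose proof (pic_cauchy F L a B0 HF HB0 N n x Hn).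
  pose proof (pic_cauchy F L a B0 HF HB0 N m x Hm).
  replace (pic F a n x - pic F a m x) with ((pic F a n x - pic F a N x) - (pic F a m x - pic F a N x)) by ring.
  eapply Rle_lt_trans. apply Rabs_triang. rewrite Rabs_Ropp. lra. }
destruct Hex as [l Hl]. unfold ysol. rewrite (is_lim_seq_unique _ _ Hl). simpl. exact Hl.
Qed.

Lemma ysol_tail F L a B0 : ode_ok F L -> (forall x, Rabs (F x a) <= B0) ->
  forall n x, Rabs (ysol F a x - pic F a n x) <= 2 * (B0/(2*L)) * exp (2*L*Rabs x) * (/2)^n.
Proof.
intros HF HB0 n x.
pose proof (ysol_lim F L a B0 HF HB0 x) as Hl.
apply (is_lim_seq_incr_n _ n) in Hl.
set (c := 2 * (B0/(2*L)) * exp (2*L*Rabs x) * (/2)^n).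
assert (Hb : forall k, Rabs (pic F a (k + n) x - pic F a n x) <= c).
{ intros k. apply (pic_cauchy F L a B0 HF HB0). lia. }
assert (H1 : Rbar_le (ysol F a x) (pic F a n x + c)).
{ apply (is_lim_seq_le (fun k => pic F a (k + n) x) (fun _ => pic F a n x + c) _ _ ) ; auto.
  - intros k. specialize (Hb k). apply Rabs_le_between' in Hb. lra.
  - apply is_lim_seq_const. }
assert (H2 : Rbar_le (pic F a n x - c) (ysol F a x)).
{ apply (is_lim_seq_le (fun _ => pic F a n x - c) (fun k => pic F a (k + n) x) _ _ ) ; auto.
  - intros k. specialize (Hb k). apply Rabs_le_between' in Hb. lra.
  - apply is_lim_seq_const. }
simpl in H1, H2. apply Rabs_le. lra.
Qed.

Lemma ysol_0 F L a B0 : ode_ok F L -> (forall x, Rabs (F x a) <= B0) -> ysol F a 0 = a.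
Proof.
intros HF HB0. pose proof (ysol_tail F L a B0 HF HB0 0 0) as H.
rewrite pic_0 in H. simpl in H. rewrite Rabs_R0, Rmult_0_r, exp_0, Rmult_1_r, Rmult_1_r in H.
apply Rabs_le_between' in H.
apply Rle_antisym; apply (le_geom _ _ (2 * (B0/(2*L)))); intros n.
- pose proof (ysol_tail F L a B0 HF HB0 n 0) as H'. rewrite pic_0, Rabs_R0, Rmult_0_r, exp_0, Rmult_1_r in H'.
  apply Rabs_le_between' in H'. lra.
- pose proof (ysol_tail F L a B0 HF HB0 n 0) as H'. rewrite pic_0, Rabs_R0, Rmult_0_r, exp_0, Rmult_1_r in H'.
  apply Rabs_le_between' in H'. lra.
Qed.

Lemma exp_le_mono x y : x <= y -> exp x <= exp y.
Proof. intros [H|H]; [left; apply exp_increasing; auto| subst; lra]. Qed.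

Lemma pic_F_bound F L a B0 : ode_ok F L -> (forall x, Rabs (F x a) <= B0) ->
  forall m t, Rabs (F t (pic F a m t)) <= B0 + L * (2 * (B0/(2*L)) * exp (2*L*Rabs t)).
Proof.
intros HF HB0 m t. pose proof HF as [HL [HLip _]].
replace (F t (pic F a m t)) with (F t a + (F t (pic F a m t) - F t a)) by ring.
eapply Rle_trans. apply Rabs_triang.
pose proof (HB0 t). pose proof (HLip t (pic F a m t) a).
pose proof (pic_cauchy F L a B0 HF HB0 0 m t (Nat.le_0_l _)). simpl in H1.
rewrite Rmult_1_r in H1.
assert (L * Rabs (pic F a m t - a) <= L * (2 * (B0 / (2 * L)) * exp (2 * L * Rabs t))) by (apply Rmult_le_compat_l; lra).
lra.
Qed.

Lemma pic_lip F L a B0 R0 : ode_ok F L -> (forall x, Rabs (F x a) <= B0) ->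
  forall n x z, Rabs x <= R0 -> Rabs z <= R0 ->
  Rabs (pic F a n x - pic F a n z) <= (B0 + L * (2 * (B0/(2*L)) * exp (2*L*R0))) * Rabs (x - z).
Proof.
intros HF HB0 n x z Hx Hz. pose proof HF as [HL _].
assert (HB0p : 0 <= B0). { specialize (HB0 0). pose proof (Rabs_pos (F 0 a)). lra. }
assert (Hb : 0 <= B0/(2*L)) by (apply Rdiv_le_0_compat; lra).
assert (HK : 0 <= B0 + L * (2 * (B0/(2*L)) * exp (2*L*R0))).
{ pose proof (exp_pos (2*L*R0)). assert (0 <= 2 * (B0/(2*L)) * exp (2*L*R0)) by nra. nra. }
destruct n as [|m].
- simpl. rewrite Rminus_diag, Rabs_R0. apply Rmult_le_pos; auto. apply Rabs_pos.
- destruct (MVT_gen (pic F a (S m)) z x (fun t => F t (pic F a m t))) as [c [Hc Heq]].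
  + intros t _. apply (pic_deriv F L a m HF).
  + intros t _. apply continuity_pt_filterlim. apply (pic_cont F L a (S m) HF).
  + rewrite Heq, Rabs_mult.
    rewrite <- (Rabs_Ropp (x - z)), Ropp_minus_distr.
    apply Rmult_le_compat_r; [apply Rabs_pos|].
    eapply Rle_trans. apply (pic_F_bound F L a B0 HF HB0).
    assert (Rabs c <= R0).
    { apply Rabs_le_between in Hx. apply Rabs_le_between in Hz.
      unfold Rmin, Rmax in Hc. apply Rabs_le. destruct Rle_dec; lra. }
    assert (exp (2*L*Rabs c) <= exp (2*L*R0)) by (apply exp_le_mono; nra).
    apply Rplus_le_compat_l, Rmult_le_compat_l; [lra|]. apply Rmult_le_compat_l; lra.
Qed.

Lemma ysol_lip F L a B0 R0 : ode_ok F L -> (forall x, Rabs (F x a) <= B0) ->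
  forall x z, Rabs x <= R0 -> Rabs z <= R0 ->
  Rabs (ysol F a x - ysol F a z) <= (B0 + L * (2 * (B0/(2*L)) * exp (2*L*R0))) * Rabs (x - z).
Proof.
intros HF HB0 x z Hx Hz. pose proof HF as [HL _].
apply (le_geom _ _ (2 * (2 * (B0/(2*L)) * exp (2*L*R0)))). intros n.
pose proof (ysol_tail F L a B0 HF HB0 n x).
pose proof (ysol_tail F L a B0 HF HB0 n z).
pose proof (pic_lip F L a B0 R0 HF HB0 n x z Hx Hz).
assert (HB0p : 0 <= B0). { specialize (HB0 0). pose proof (Rabs_pos (F 0 a)). lra. }
assert (Hb : 0 <= B0/(2*L)) by (apply Rdiv_le_0_compat; lra).
assert (exp (2*L*Rabs x) <= exp (2*L*R0)) by (apply exp_le_mono; nra).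
assert (exp (2*L*Rabs z) <= exp (2*L*R0)) by (apply exp_le_mono; nra).
assert (0 <= (/2)^n) by (apply pow_le; lra).
replace (ysol F a x - ysol F a z) with ((ysol F a x - pic F a n x) + (pic F a n x - pic F a n z) - (ysol F a z - pic F a n z)) by ring.
eapply Rle_trans. apply Rabs_triang. rewrite Rabs_Ropp.
eapply Rle_trans. apply Rplus_le_compat_r. apply Rabs_triang.
assert (2 * (B0 / (2 * L)) * exp (2 * L * Rabs x) * (/ 2) ^ n <= 2 * (B0 / (2 * L)) * exp (2 * L * R0) * (/ 2) ^ n).
{ apply Rmult_le_compat_r; auto. apply Rmult_le_compat_l; lra. }
assert (2 * (B0 / (2 * L)) * exp (2 * L * Rabs z) * (/ 2) ^ n <= 2 * (B0 / (2 * L)) * exp (2 * L * R0) * (/ 2) ^ n).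
{ apply Rmult_le_compat_r; auto. apply Rmult_le_compat_l; lra. }
lra.
Qed.

Lemma ysol_cont F L a B0 : ode_ok F L -> (forall x, Rabs (F x a) <= B0) ->
  forall x, continuous (ysol F a) x.
Proof.
intros HF HB0 x. apply cont_of_eps. intros eps Heps.
set (K := B0 + L * (2 * (B0/(2*L)) * exp (2*L*(Rabs x + 1)))).
assert (HK : 0 <= K).
{ pose proof HF as [HL _]. assert (HB0p : 0 <= B0). { specialize (HB0 0). pose proof (Rabs_pos (F 0 a)). lra. }
  assert (Hb : 0 <= B0/(2*L)) by (apply Rdiv_le_0_compat; lra).
  pose proof (exp_pos (2*L*(Rabs x + 1))). unfold K.
  assert (0 <= 2 * (B0/(2*L)) * exp (2*L*(Rabs x + 1))) by nra. nra. }
exists (Rmin 1 (eps / (K + 1))). split.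
{ apply Rmin_glb_lt; [lra| apply Rdiv_lt_0_compat; lra]. }
intros z Hz.
assert (Hz1 : Rabs (z - x) < 1) by (eapply Rlt_le_trans; [apply Hz| apply Rmin_l]).
assert (Hz2 : Rabs (z - x) < eps / (K+1)) by (eapply Rlt_le_trans; [apply Hz| apply Rmin_r]).
assert (Rabs z <= Rabs x + 1).
{ replace z with (x + (z - x)) by ring. eapply Rle_trans. apply Rabs_triang. lra. }
pose proof (ysol_lip F L a B0 (Rabs x + 1) HF HB0 z x H ltac:(lra)). fold K in H0.
assert (K * Rabs (z - x) <= K * (eps/(K+1))) by (apply Rmult_le_compat_l; lra).
assert (K * (eps / (K+1)) < eps).
{ apply (Rmult_lt_reg_r (K+1)); [lra|]. replace (K * (eps/(K+1)) * (K+1)) with (K*eps) by (field; lra). nra. }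
lra.
Qed.

Lemma ysol_deriv F L a B0 : ode_ok F L -> (forall x, Rabs (F x a) <= B0) ->
  forall z, is_derive (ysol F a) z (F z (ysol F a z)).
Proof.
intros HF HB0 z. pose proof HF as [HL [HLip [Hc _]]].
assert (HB0p : 0 <= B0). { specialize (HB0 0). pose proof (Rabs_pos (F 0 a)). lra. }
assert (Hb : 0 <= B0/(2*L)) by (apply Rdiv_le_0_compat; lra).
apply is_derive_Reals. intros eps Heps.
set (g := fun t => F t (ysol F a t)).
assert (Hg : continuous g z) by (apply Hc; apply (ysol_cont F L a B0 HF HB0)).
destruct (eps_of_cont g z Hg (eps/2) ltac:(lra)) as [d1 [Hd1 Hg1]].
assert (Hpos : 0 < Rmin 1 d1) by (apply Rmin_glb_lt; lra).
exists (mkposreal _ Hpos). simpl. intros h Hh0 Hh.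
assert (Hh1 : Rabs h < 1) by (eapply Rlt_le_trans; [apply Hh| apply Rmin_l]).
assert (Hh2 : Rabs h < d1) by (eapply Rlt_le_trans; [apply Hh| apply Rmin_r]).
set (R0 := Rabs z + 1).
set (C := 2 * (B0/(2*L)) * exp (2*L*R0)).
assert (HC : 0 <= C) by (unfold C; pose proof (exp_pos (2*L*R0)); nra).
assert (Hzh : Rabs (z + h) <= R0).
{ unfold R0. eapply Rle_trans. apply Rabs_triang. lra. }
assert (Hz : Rabs z <= R0) by (unfold R0; lra).
assert (Htail : forall n x, Rabs x <= R0 -> Rabs (ysol F a x - pic F a n x) <= C * (/2)^n).
{ intros n x Hx. eapply Rle_trans. apply (ysol_tail F L a B0 HF HB0).
  apply Rmult_le_compat_r; [apply pow_le; lra|]. apply Rmult_le_compat_l; [lra|].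
  apply exp_le_mono. apply Rmult_le_compat_l; lra. }
assert (Hmain : Rabs (ysol F a (z + h) - ysol F a z - g z * h) <= eps/2 * Rabs h).
{ apply (le_geom _ _ (C + L * C * Rabs h)). intros n.
  destruct (MVT_gen (pic F a (S n)) z (z + h) (fun t => F t (pic F a n t))) as [xi [Hxi Heq]].
  + intros t _. apply (pic_deriv F L a n HF).
  + intros t _. apply continuity_pt_filterlim. apply (pic_cont F L a (S n) HF).
  + cbv beta in Heq. replace (z + h - z) with h in Heq by ring.
    assert (Hxz : Rabs (xi - z) <= Rabs h).
    { unfold Rmin, Rmax in Hxi. apply Rabs_le. destruct Rle_dec.
      - rewrite Rabs_pos_eq by lra. lra.
      - rewrite Rabs_left by lra. lra. }
    assert (Hxi0 : Rabs xi <= R0).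
    { replace xi with (z + (xi - z)) by ring. eapply Rle_trans. apply Rabs_triang. unfold R0; lra. }
    assert (HF1 : Rabs (F xi (pic F a n xi) - g z) <= L * (C * (/2)^n) + eps/2).
    { replace (F xi (pic F a n xi) - g z) with ((F xi (pic F a n xi) - F xi (ysol F a xi)) + (g xi - g z)) by (unfold g; ring).
      eapply Rle_trans. apply Rabs_triang. apply Rplus_le_compat.
      - eapply Rle_trans. apply HLip. apply Rmult_le_compat_l; [lra|].
        rewrite <- Rabs_Ropp, Ropp_minus_distr. apply Htail; auto.
      - left. apply Hg1. lra. }
    pose proof (Htail (S n) (z + h) Hzh) as T1.
    pose proof (Htail (S n) z Hz) as T2.
    change ((/2)^(S n)) with (/2 * (/2)^n) in T1, T2.
    replace (ysol F a (z + h) - ysol F a z - g z * h) with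
      ((ysol F a (z + h) - pic F a (S n) (z + h)) - (ysol F a z - pic F a (S n) z) + (F xi (pic F a n xi) - g z) * h)
      by (assert (Heq2 : pic F a (S n) (z + h) = pic F a (S n) z + F xi (pic F a n xi) * h) by lra; rewrite Heq2; ring).
    eapply Rle_trans. apply Rabs_triang.
    eapply Rle_trans. apply Rplus_le_compat_r. apply Rabs_triang. rewrite Rabs_Ropp, Rabs_mult.
    assert (Rabs (F xi (pic F a n xi) - g z) * Rabs h <= (L * (C * (/ 2) ^ n) + eps / 2) * Rabs h)
      by (apply Rmult_le_compat_r; [apply Rabs_pos| auto]).
    assert (0 <= (/2)^n) by (apply pow_le; lra).
    nra. }
replace ((ysol F a (z + h) - ysol F a z) / h - F z (ysol F a z)) with
  ((ysol F a (z + h) - ysol F a z - g z * h) / h) by (unfold g; field; auto).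
unfold Rdiv. rewrite Rabs_mult, Rabs_inv.
assert (0 < Rabs h) by (apply Rabs_pos_lt; auto).
apply (Rmult_lt_reg_r (Rabs h)); auto.
rewrite Rmult_assoc, Rinv_l by lra. nra.
Qed.

Lemma ode_exists F L : ode_ok F L -> forall a, exists y : R -> R,
  y 0 = a /\ forall x, is_derive y x (F x (y x)).
Proof.
intros HF a. pose proof HF as [_ [_ [_ Hb]]]. destruct (Hb a) as [B0 HB0].
exists (ysol F a). split.
- apply (ysol_0 F L a B0 HF HB0).
- apply (ysol_deriv F L a B0 HF HB0).
Qed.

Lemma per_nat f : periodic1 f -> forall n x, f (x + INR n) = f x.
Proof.
intros Hp n. induction n as [|n IH]; intros x.
- simpl. rewrite Rplus_0_r. auto.
- rewrite S_INR. replace (x + (INR n + 1)) with ((x + INR n) + 1) by ring. rewrite Hp. auto.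
Qed.

Lemma per_Z f : periodic1 f -> forall k x, f (x + IZR k) = f x.
Proof.
intros Hp k x. destruct k as [|p|p].
- simpl. rewrite Rplus_0_r. auto.
- change (IZR (Z.pos p)) with (IPR p). rewrite <- INR_IPR. apply per_nat; auto.
- change (IZR (Z.neg p)) with (- IPR p). rewrite <- INR_IPR.
  rewrite <- (per_nat f Hp (Pos.to_nat p) (x + - INR (Pos.to_nat p))).
  f_equal. ring.
Qed.

Lemma frac_ex x : exists k, 0 <= x - IZR k < 1.
Proof. exists (Int_part x). pose proof (base_Int_part x). lra. Qed.

Lemma per_reduce f : periodic1 f -> forall x0 x, exists t, x0 <= t < x0 + 1 /\ f x = f t.
Proof.
intros Hp x0 x. destruct (frac_ex (x - x0)) as [k Hk].
exists (x - IZR k). split; [lra|].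
rewrite <- (per_Z f Hp k (x - IZR k)). f_equal. ring.
Qed.

Lemma per_max f Df : periodic1 f -> (forall x, is_derive f x (Df x)) ->
  exists xM, (forall x, f x <= f xM) /\ Df xM = 0.
Proof.
intros Hp Hd.
assert (Hc := deriv_cont f Df Hd).
destruct (continuity_ab_maj f 0 1 ltac:(lra)) as [xM [HM _]].
{ intros c _. apply cont_pt_of_continuous, Hc. }
assert (Hall : forall x, f x <= f xM).
{ intros x. destruct (per_reduce f Hp 0 x) as [t [Ht ->]]. apply HM; lra. }
exists xM; split; auto.
destruct (Rtotal_order (Df xM) 0) as [Hn|[He|Hpos]]; auto; exfalso.
- destruct (local_sign_neg f xM _ (Hd xM) Hn) as [d [Hd0 [_ Hl]]].
  specialize (Hl (xM - d/2) ltac:(lra)). specialize (Hall (xM - d/2)). lra.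
- destruct (local_sign f xM _ (Hd xM) Hpos) as [d [Hd0 [Hr _]]].
  specialize (Hr (xM + d/2) ltac:(lra)). specialize (Hall (xM + d/2)). lra.
Qed.

Lemma per_min f Df : periodic1 f -> (forall x, is_derive f x (Df x)) ->
  exists xm, (forall x, f xm <= f x) /\ Df xm = 0.
Proof.
intros Hp Hd.
assert (Hp' : periodic1 (fun x => - f x)). { intros x. rewrite Hp. auto. }
assert (Hd' : forall x, is_derive (fun x => - f x) x (- Df x)).
{ intros x. apply (is_derive_opp (K:=R_AbsRing) (V:=R_NormedModule) f x (Df x)), Hd. }
destruct (per_max _ _ Hp' Hd') as [xm [H1 H2]].
exists xm; split; [intros x; specialize (H1 x); lra| lra].
Qed.

Lemma is_derive_refl (y : R -> R) t d : is_derive y (-t) d -> is_derive (fun s => y (-s)) t (-d).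
Proof.
intros H.
assert (Hn : is_derive (fun s : R => -s) t (-1)).
{ auto_derive; auto. }
pose proof (is_derive_comp (K:=R_AbsRing) (V:=R_NormedModule) y (fun s => -s) t d (-1) H Hn) as H2.
replace (-d) with (scal (-1) d). exact H2. unfold scal; simpl. unfold mult; simpl. ring.
Qed.

Lemma gronwall_bwd (y1 y2 D1 D2 : R -> R) L eps x0 x1 :
  (forall x, is_derive y1 x (D1 x)) -> (forall x, is_derive y2 x (D2 x)) ->
  0 <= L -> 0 <= eps <= 1 -> x1 <= x0 ->
  (forall x, x1 <= x <= x0 -> Rabs (D1 x - D2 x) <= L * Rabs (y1 x - y2 x) + eps) ->
  (y1 x1 - y2 x1)^2 <= ((y1 x0 - y2 x0)^2 + eps) * exp ((2*L+1)*(x0 - x1)).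
Proof.
intros H1 H2 HL He Hx Hb.
pose proof (gronwall_fwd (fun s => y1 (-s)) (fun s => y2 (-s)) (fun s => - D1 (-s)) (fun s => - D2 (-s))
  L eps (-x0) (-x1)) as G.
cbv beta in G. rewrite !Ropp_involutive in G.
replace (- x1 - - x0) with (x0 - x1) in G by ring. apply G; auto.
- intros x. apply is_derive_refl. apply H1.
- intros x. apply is_derive_refl. apply H2.
- lra.
- intros x Hx'. replace (- D1 (- x) - - D2 (- x)) with (- (D1 (-x) - D2 (-x))) by ring.
  rewrite Rabs_Ropp. apply Hb. lra.
Qed.

Lemma ode_unique (y1 y2 D1 D2 : R -> R) L x0 :
  (forall x, is_derive y1 x (D1 x)) -> (forall x, is_derive y2 x (D2 x)) -> 0 <= L ->
  (forall x, Rabs (D1 x - D2 x) <= L * Rabs (y1 x - y2 x)) ->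
  y1 x0 = y2 x0 -> forall x, y1 x = y2 x.
Proof.
intros H1 H2 HL Hb H0 x.
assert (Hsq : (y1 x - y2 x)^2 <= 0).
{ destruct (Rle_or_lt x0 x) as [Hx|Hx].
  - pose proof (gronwall_fwd y1 y2 D1 D2 L 0 x0 x H1 H2 HL ltac:(lra) Hx) as G.
    rewrite H0, Rminus_diag in G. simpl in G.
    replace ((0 * (0 * 1) + 0) * exp ((2 * L + 1) * (x - x0))) with 0 in G by ring.
    apply G. intros; rewrite Rplus_0_r; auto.
  - pose proof (gronwall_bwd y1 y2 D1 D2 L 0 x0 x H1 H2 HL ltac:(lra) ltac:(lra)) as G.
    rewrite H0, Rminus_diag in G. simpl in G.
    replace ((0 * (0 * 1) + 0) * exp ((2 * L + 1) * (x0 - x))) with 0 in G by ring.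
    apply G. intros; rewrite Rplus_0_r; auto. }
assert (0 <= (y1 x - y2 x)^2) by apply pow2_ge_0. nra.
Qed.

Lemma lip_cont (V : R -> R) L : (forall x y, Rabs (V x - V y) <= L * Rabs (x - y)) -> forall x, continuous V x.
Proof.
intros HL x. apply cont_of_eps. intros eps Heps.
exists (eps / (Rabs L + 1)). split. { apply Rdiv_lt_0_compat; [lra|]. pose proof (Rabs_pos L); lra. }
intros z Hz. eapply Rle_lt_trans. apply HL.
assert (L * Rabs (z - x) <= Rabs L * Rabs (z - x)) by (apply Rmult_le_compat_r; [apply Rabs_pos| apply Rle_abs]).
assert (Rabs L * Rabs (z - x) <= Rabs L * (eps / (Rabs L + 1))) by (apply Rmult_le_compat_l; [apply Rabs_pos| lra]).
assert (Rabs L * (eps / (Rabs L + 1)) < eps).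
{ pose proof (Rabs_pos L). apply (Rmult_lt_reg_r (Rabs L + 1)); [lra|].
  replace (Rabs L * (eps / (Rabs L + 1)) * (Rabs L + 1)) with (Rabs L * eps) by (field; lra). nra. }
lra.
Qed.

Lemma V_bound V : lipschitz V -> periodic1 V -> exists Vb, 0 <= Vb /\ forall x, Rabs (V x - V 0) <= Vb.
Proof.
intros [L HL] Hp. exists (Rabs L). split; [apply Rabs_pos|].
intros x. destruct (per_reduce V Hp 0 x) as [t [Ht ->]].
eapply Rle_trans. apply HL. rewrite Rminus_0_r, Rabs_pos_eq by lra.
assert (L * t <= Rabs L * t) by (apply Rmult_le_compat_r; [lra| apply Rle_abs]).
pose proof (Rabs_pos L). nra.
Qed.

Lemma G_cont G : is_C1 G -> forall x, continuous G x.
Proof.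
intros [Hd _] x. apply (ex_derive_continuous (K:=R_AbsRing) (V:=R_NormedModule)). apply Hd.
Qed.

Lemma G_lip G : is_C1 G -> forall R0, exists LG, 0 <= LG /\
  forall p q, Rabs p <= R0 -> Rabs q <= R0 -> Rabs (G p - G q) <= LG * Rabs (p - q).
Proof.
intros [Hd Hc] R0.
destruct (continuity_ab_maj (fun t => Rabs (Derive G t)) (- Rabs R0) (Rabs R0)) as [xM [HM _]].
{ pose proof (Rabs_pos R0); lra. }
{ intros c _. apply continuity_pt_filterlim.
  apply (continuous_comp (Derive G) Rabs). apply Hc. apply continuous_Rabs. }
exists (Rabs (Derive G xM)). split; [apply Rabs_pos|].
intros p q Hp Hq.
destruct (MVT_gen G q p (Derive G)) as [c [Hc1 Heq]].
- intros x _. apply Derive_correct, Hd.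
- intros x _. apply continuity_pt_filterlim. apply (G_cont G (conj Hd Hc)).
- rewrite Heq, Rabs_mult. apply Rmult_le_compat_r; [apply Rabs_pos|].
  apply HM. pose proof (Rle_abs R0). apply Rabs_le_between in Hp. apply Rabs_le_between in Hq.
  unfold Rmin, Rmax in Hc1. destruct Rle_dec; split; lra.
Qed.

Lemma coerc_bound G : coercive G -> forall K, exists N, 0 < N /\ forall p, N <= Rabs p -> K < G p.
Proof.
intros [H1 H2] K.
destruct (H1 (fun y => K < y) (ex_intro _ K (fun x Hx => Hx))) as [M1 HM1].
destruct (H2 (fun y => K < y) (ex_intro _ K (fun x Hx => Hx))) as [M2 HM2].
exists (Rmax 1 (Rmax M1 (- M2)) + 1).
assert (H1' := Rmax_l 1 (Rmax M1 (-M2))). assert (H2' := Rmax_r 1 (Rmax M1 (-M2))).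
assert (H3 := Rmax_l M1 (-M2)). assert (H4 := Rmax_r M1 (-M2)).
split; [lra|]. intros p Hp.
destruct (Rle_or_lt 0 p).
- rewrite Rabs_pos_eq in Hp by lra. apply HM1. lra.
- rewrite Rabs_left in Hp by lra. apply HM2. lra.
Qed.

Definition gsol (G V : R -> R) (H : R) (f : R -> R) :=
  (forall x, is_derive f x (H - V x - G (f x))) /\ periodic1 f.

Lemma gsol_extremes G V H f : gsol G V H f ->
  exists xM xm, (forall x, f xm <= f x <= f xM) /\ H = V xM + G (f xM) /\ H = V xm + G (f xm).
Proof.
intros [Hd Hp].
destruct (per_max f _ Hp Hd) as [xM [HM HM0]].
destruct (per_min f _ Hp Hd) as [xm [Hm Hm0]].
exists xM, xm. split; [intros x; split; auto| split; lra].
Qed.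

Lemma touch_H G V H1 H2 f1 f2 x0 : gsol G V H1 f1 -> gsol G V H2 f2 -> f1 x0 = f2 x0 -> ~ (H2 < H1).
Proof.
intros [Hd1 Hp1] [Hd2 Hp2] H0 Hlt.
pose proof (crossing (fun x => f1 x - f2 x) (fun x => (H1 - V x - G (f1 x)) - (H2 - V x - G (f2 x))) x0) as C.
assert (0 < f1 (x0 + 1) - f2 (x0 + 1)).
{ apply C; try lra.
  - intros x. apply is_derive_Rminus; auto.
  - intros x Hx. assert (f1 x = f2 x) by lra. rewrite H. lra. }
rewrite Hp1, Hp2 in H. lra.
Qed.

Lemma touch G V H1 H2 f1 f2 x0 : is_C1 G -> gsol G V H1 f1 -> gsol G V H2 f2 -> f1 x0 = f2 x0 ->
  H1 = H2 /\ forall x, f1 x = f2 x.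
Proof.
intros HG S1 S2 H0.
assert (HH : H1 = H2).
{ destruct (Rtotal_order H1 H2) as [Hl|[He|Hg]]; auto; exfalso.
  - apply (touch_H G V H2 H1 f2 f1 x0 S2 S1); auto.
  - apply (touch_H G V H1 H2 f1 f2 x0 S1 S2); auto. }
split; auto. subst H2.
destruct (gsol_extremes G V H1 f1 S1) as [xM1 [xm1 [B1 _]]].
destruct (gsol_extremes G V H1 f2 S2) as [xM2 [xm2 [B2 _]]].
set (R0 := Rabs (f1 xM1) + Rabs (f1 xm1) + Rabs (f2 xM2) + Rabs (f2 xm2)).
destruct (G_lip G HG R0) as [LG [HLG HLip]].
assert (Hb1 : forall x, Rabs (f1 x) <= R0).
{ intros x. specialize (B1 x). unfold R0. pose proof (Rabs_pos (f2 xM2)). pose proof (Rabs_pos (f2 xm2)).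
  apply Rabs_le. pose proof (Rabs_pos (f1 xM1)). pose proof (Rabs_pos (f1 xm1)). pose proof (Rle_abs (f1 xM1)). pose proof (Rle_abs (- f1 xm1)) as Hx; rewrite Rabs_Ropp in Hx. lra. }
assert (Hb2 : forall x, Rabs (f2 x) <= R0).
{ intros x. specialize (B2 x). unfold R0. pose proof (Rabs_pos (f1 xM1)). pose proof (Rabs_pos (f1 xm1)).
  apply Rabs_le. pose proof (Rabs_pos (f2 xM2)). pose proof (Rabs_pos (f2 xm2)). pose proof (Rle_abs (f2 xM2)). pose proof (Rle_abs (- f2 xm2)) as Hx; rewrite Rabs_Ropp in Hx. lra. }
destruct S1 as [Hd1 _]. destruct S2 as [Hd2 _].
apply (ode_unique f1 f2 _ _ LG x0 Hd1 Hd2 HLG); auto.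
intros x. replace (H1 - V x - G (f1 x) - (H1 - V x - G (f2 x))) with (G (f2 x) - G (f1 x)) by ring.
rewrite <- Rabs_Ropp, Ropp_minus_distr. apply HLip; auto.
Qed.

Lemma no_touch_order (f1 f2 : R -> R) : (forall x, continuous f1 x) -> (forall x, continuous f2 x) ->
  (forall x, f1 x <> f2 x) -> f1 0 < f2 0 -> forall x, f1 x < f2 x.
Proof.
intros C1 C2 Hn H0 x.
destruct (Rlt_or_le (f1 x) (f2 x)) as [|Hle]; auto. exfalso.
assert (Cd : forall x, continuous (fun t => f2 t - f1 t) x).
{ intros t. apply (continuous_minus (V:=R_NormedModule)); auto. }
destruct (IVT_gen_consistent (fun t => f2 t - f1 t) 0 x 0 Cd) as [z [_ Hz]].
{ unfold Rmin, Rmax. destruct Rle_dec; lra. }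
apply (Hn z). lra.
Qed.

Lemma gsol_cont G V H f : gsol G V H f -> forall x, continuous f x.
Proof. intros [Hd _]. apply (deriv_cont f _ Hd). Qed.

Lemma gsol_order G V H1 H2 f1 f2 : is_C1 G -> gsol G V H1 f1 -> gsol G V H2 f2 -> f1 0 < f2 0 ->
  forall x, f1 x < f2 x.
Proof.
intros HG S1 S2 H0. apply no_touch_order; try (eapply gsol_cont; eauto); auto.
intros x Hx. destruct (touch G V H1 H2 f1 f2 x HG S1 S2 Hx) as [_ Heq]. rewrite Heq in H0. lra.
Qed.

Lemma mean_bounds (f : R -> R) m M : (forall x, continuous f x) -> (forall x, m <= f x <= M) ->
  m <= RInt f 0 1 <= M.
Proof.
intros Hc Hb.
assert (Hex : ex_RInt f 0 1) by (apply (ex_RInt_continuous (V:=R_CompleteNormedModule)); intros; apply Hc).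
split.
- replace m with (RInt (fun _ => m) 0 1) at 1.
  + apply RInt_le; auto; [lra| apply ex_RInt_const| intros x _; apply Hb].
  + rewrite RInt_const. unfold scal; simpl; unfold mult; simpl. ring.
- replace M with (RInt (fun _ => M) 0 1).
  + apply RInt_le; auto; [lra| apply ex_RInt_const| intros x _; apply Hb].
  + rewrite RInt_const. unfold scal; simpl; unfold mult; simpl. ring.
Qed.

Definition clamp M p := Rmax (-M) (Rmin M p).
Definition GM (G : R -> R) M p := G (clamp M p) + Rabs (p - clamp M p).
Definition FH (G V : R -> R) M H := fun x y => H - V x - GM G M y.

Lemma clamp_props M p q : 0 < M ->
  Rabs (clamp M p - clamp M q) <= Rabs (p - q) /\
  Rabs ((p - clamp M p) - (q - clamp M q)) <= Rabs (p - q) /\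
  Rabs (clamp M p) <= M.
Proof.
intros HM. unfold clamp, Rmax, Rmin.
destruct (Rle_or_lt p q) as [Hpq|Hpq];
[rewrite (Rabs_left1 (p - q)) by lra | rewrite (Rabs_pos_eq (p - q)) by lra];
repeat destruct Rle_dec; repeat split; apply Rabs_le; lra.
Qed.

Lemma clamp_id M p : Rabs p <= M -> clamp M p = p.
Proof.
intros H. apply Rabs_le_between in H. unfold clamp, Rmax, Rmin. repeat destruct Rle_dec; lra.
Qed.

Lemma GM_id G M p : Rabs p <= M -> GM G M p = G p.
Proof. intros H. unfold GM. rewrite clamp_id by auto. rewrite Rminus_diag, Rabs_R0. ring. Qed.

Lemma GM_hi G M p : 0 < M -> M <= p -> G M <= GM G M p.
Proof.
intros HM H. unfold GM. replace (clamp M p) with M.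
- pose proof (Rabs_pos (p - M)). lra.
- unfold clamp, Rmax, Rmin. repeat destruct Rle_dec; lra.
Qed.

Lemma GM_lo G M p : 0 < M -> p <= - M -> G (-M) <= GM G M p.
Proof.
intros HM H. unfold GM. replace (clamp M p) with (-M).
- pose proof (Rabs_pos (p - - M)). lra.
- unfold clamp, Rmax, Rmin. repeat destruct Rle_dec; lra.
Qed.

Definition setting (G V : R -> R) M LG Vb :=
  is_C1 G /\ 0 < M /\ 0 <= LG /\
  (forall p q, Rabs p <= M -> Rabs q <= M -> Rabs (G p - G q) <= LG * Rabs (p - q)) /\
  lipschitz V /\ periodic1 V /\ 0 <= Vb /\ (forall x, Rabs (V x - V 0) <= Vb).

Lemma GM_lip G V M LG Vb : setting G V M LG Vb ->
  forall p q, Rabs (GM G M p - GM G M q) <= (LG + 1) * Rabs (p - q).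
Proof.
intros [_ [HM [HLG [HGl _]]]] p q.
destruct (clamp_props M p q HM) as [C1 [C2 C3]].
destruct (clamp_props M q p HM) as [_ [_ C4]].
unfold GM.
replace (G (clamp M p) + Rabs (p - clamp M p) - (G (clamp M q) + Rabs (q - clamp M q)))
  with ((G (clamp M p) - G (clamp M q)) + (Rabs (p - clamp M p) - Rabs (q - clamp M q))) by ring.
eapply Rle_trans. apply Rabs_triang.
assert (Rabs (G (clamp M p) - G (clamp M q)) <= LG * Rabs (p - q)).
{ eapply Rle_trans. apply HGl; auto. apply Rmult_le_compat_l; auto. }
assert (Rabs (Rabs (p - clamp M p) - Rabs (q - clamp M q)) <= Rabs (p - q)).
{ eapply Rle_trans. apply Rabs_triang_inv2. auto. }
lra.
Qed.

Lemma FH_ok G V M LG Vb H : setting G V M LG Vb -> ode_ok (FH G V M H) (LG + 1).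
Proof.
intros HS. pose proof HS as [HG [HM [HLG [HGl [[LV HLV] [Hp [HVb HVb2]]]]]]].
assert (HGMc : forall x, continuous (GM G M) x) by (apply (lip_cont _ (LG+1)); apply (GM_lip G V M LG Vb HS)).
assert (HVc : forall x, continuous V x) by (apply (lip_cont _ LV); auto).
split; [lra|split; [|split]].
- intros x y z. unfold FH.
  replace (H - V x - GM G M y - (H - V x - GM G M z)) with (GM G M z - GM G M y) by ring.
  rewrite (Rabs_minus_sym y z). apply (GM_lip G V M LG Vb HS).
- intros u Hu x. unfold FH.
  apply (continuous_minus (V:=R_NormedModule)).
  + apply (continuous_minus (V:=R_NormedModule)). apply continuous_const. apply HVc.
  + apply (continuous_comp u (GM G M)). apply Hu. apply HGMc.
- intros y. exists (Rabs H + (Rabs (V 0) + Vb) + Rabs (GM G M y)). intros x. unfold FH.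
  unfold Rminus. eapply Rle_trans. apply Rabs_triang. rewrite Rabs_Ropp.
  apply Rplus_le_compat_r. eapply Rle_trans. apply Rabs_triang. rewrite Rabs_Ropp.
  apply Rplus_le_compat_l. specialize (HVb2 x).
  replace (V x) with (V 0 + (V x - V 0)) by ring. eapply Rle_trans. apply Rabs_triang. lra.
Qed.

Definition sol G V M H a := ysol (FH G V M H) a.

Lemma sol_0 G V M LG Vb H a : setting G V M LG Vb -> sol G V M H a 0 = a.
Proof.
intros HS. pose proof (FH_ok G V M LG Vb H HS) as HF. pose proof HF as [_ [_ [_ Hb]]].
destruct (Hb a) as [B0 HB0]. apply (ysol_0 _ _ a B0 HF HB0).
Qed.

Lemma sol_deriv G V M LG Vb H a : setting G V M LG Vb ->
  forall x, is_derive (sol G V M H a) x (H - V x - GM G M (sol G V M H a x)).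
Proof.
intros HS. pose proof (FH_ok G V M LG Vb H HS) as HF. pose proof HF as [_ [_ [_ Hb]]].
destruct (Hb a) as [B0 HB0]. apply (ysol_deriv _ _ a B0 HF HB0).
Qed.

Lemma sol_gron G V M LG Vb H H' a a' x : setting G V M LG Vb -> 0 <= x <= 1 -> Rabs (H - H') <= 1 ->
  (sol G V M H a x - sol G V M H' a' x)^2 <= ((a - a')^2 + Rabs (H - H')) * exp (2*(LG+1)+1).
Proof.
intros HS Hx HH. pose proof HS as [_ [_ [HLG _]]].
pose proof (gronwall_fwd (sol G V M H a) (sol G V M H' a') _ _ (LG+1) (Rabs (H - H')) 0 x
  (sol_deriv G V M LG Vb H a HS) (sol_deriv G V M LG Vb H' a' HS) ltac:(lra) ltac:(split; [apply Rabs_pos| auto]) ltac:(lra)) as Gr.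
rewrite !(sol_0 G V M LG Vb) in Gr by auto.
eapply Rle_trans. apply Gr.
- intros t _. 
  replace (H - V t - GM G M (sol G V M H a t) - (H' - V t - GM G M (sol G V M H' a' t)))
    with ((H - H') - (GM G M (sol G V M H a t) - GM G M (sol G V M H' a' t))) by ring.
  unfold Rminus at 1. eapply Rle_trans. apply Rabs_triang. rewrite Rabs_Ropp.
  pose proof (GM_lip G V M LG Vb HS (sol G V M H a t) (sol G V M H' a' t)). lra.
- apply Rmult_le_compat_l.
  + pose proof (pow2_ge_0 (a - a')). pose proof (Rabs_pos (H - H')). lra.
  + apply exp_le_mono. nra.
Qed.

Lemma sol_strict G V M LG Vb H H' a x : setting G V M LG Vb -> H < H' -> 0 < x ->
  sol G V M H a x < sol G V M H' a x.
Proof.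
intros HS HH Hx.
pose proof (crossing (fun t => sol G V M H' a t - sol G V M H a t)
  (fun t => (H' - V t - GM G M (sol G V M H' a t)) - (H - V t - GM G M (sol G V M H a t))) 0) as C.
assert (0 < sol G V M H' a x - sol G V M H a x); [|lra].
apply C; auto.
- intros t. apply is_derive_Rminus; apply (sol_deriv G V M LG Vb); auto.
- intros t Ht. assert (sol G V M H' a t = sol G V M H a t) by lra. rewrite H0. lra.
- rewrite !(sol_0 G V M LG Vb) by auto. ring.
Qed.

Lemma sol_mono G V M LG Vb H H' a x : setting G V M LG Vb -> H <= H' -> 0 < x ->
  sol G V M H a x <= sol G V M H' a x.
Proof.
intros HS [HH|HH] Hx; [left; apply (sol_strict G V M LG Vb); auto| subst; lra].
Qed.

Lemma sol_below G V M LG Vb H a : setting G V M LG Vb -> Rabs a <= M -> H < G a + V 0 - Vb ->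
  sol G V M H a 1 < a.
Proof.
intros HS Ha HH. pose proof HS as [_ [_ [_ [_ [_ [_ [_ HVb]]]]]]].
pose proof (crossing (fun t => a - sol G V M H a t)
  (fun t => 0 - (H - V t - GM G M (sol G V M H a t))) 0) as C.
assert (0 < a - sol G V M H a 1); [|lra].
apply C; try lra.
- intros t. apply is_derive_Rminus. apply is_derive_constR. apply (sol_deriv G V M LG Vb); auto.
- intros t Ht. assert (sol G V M H a t = a) by lra. rewrite H0, GM_id by auto.
  specialize (HVb t). apply Rabs_le_between in HVb. lra.
- rewrite !(sol_0 G V M LG Vb) by auto. ring.
Qed.

Lemma sol_above G V M LG Vb H a : setting G V M LG Vb -> Rabs a <= M -> G a + V 0 + Vb < H ->
  a < sol G V M H a 1.
Proof.
intros HS Ha HH. pose proof HS as [_ [_ [_ [_ [_ [_ [_ HVb]]]]]]].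
pose proof (crossing (fun t => sol G V M H a t - a)
  (fun t => (H - V t - GM G M (sol G V M H a t)) - 0) 0) as C.
assert (0 < sol G V M H a 1 - a); [|lra].
apply C; try lra.
- intros t. apply is_derive_Rminus. apply (sol_deriv G V M LG Vb); auto. apply is_derive_constR.
- intros t Ht. assert (sol G V M H a t = a) by lra. rewrite H0, GM_id by auto.
  specialize (HVb t). apply Rabs_le_between in HVb. lra.
- rewrite !(sol_0 G V M LG Vb) by auto. ring.
Qed.

Lemma is_derive_shift (f : R -> R) x d : is_derive f (x + 1) d -> is_derive (fun t => f (t + 1)) x d.
Proof.
intros H. apply is_derive_Reals. apply is_derive_Reals in H.
intros eps He. destruct (H eps He) as [del Hd]. exists del. intros h Hh1 Hh2.
replace (x + h + 1) with (x + 1 + h) by ring. apply Hd; auto.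
Qed.

Lemma sol_periodic G V M LG Vb H a : setting G V M LG Vb -> sol G V M H a 1 = a ->
  periodic1 (sol G V M H a).
Proof.
intros HS H1. pose proof HS as [_ [_ [HLG [_ [_ [HVp _]]]]]].
intros x. symmetry.
apply (ode_unique (sol G V M H a) (fun t => sol G V M H a (t + 1))
  (fun t => H - V t - GM G M (sol G V M H a t)) (fun t => H - V t - GM G M (sol G V M H a (t + 1))) (LG+1) 0).
- apply (sol_deriv G V M LG Vb); auto.
- intros t. apply is_derive_shift. rewrite <- (HVp t). apply (sol_deriv G V M LG Vb); auto.
- lra.
- intros t. replace (H - V t - GM G M (sol G V M H a t) - (H - V t - GM G M (sol G V M H a (t + 1))))
    with (GM G M (sol G V M H a (t + 1)) - GM G M (sol G V M H a t)) by ring.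
  rewrite (Rabs_minus_sym (sol G V M H a t)). apply (GM_lip G V M LG Vb HS).
- rewrite Rplus_0_l, H1, (sol_0 G V M LG Vb) by auto. auto.
Qed.

Lemma sol_gsol G V M LG Vb H a K : setting G V M LG Vb -> sol G V M H a 1 = a ->
  H - (V 0 - Vb) <= K -> K < G M -> K < G (-M) ->
  gsol G V H (sol G V M H a) /\ forall x, Rabs (sol G V M H a x) < M.
Proof.
intros HS H1 HK HGM HGm. pose proof HS as [_ [HM [_ [_ [_ [_ [_ HVb]]]]]]].
set (f := sol G V M H a).
assert (Hp : periodic1 f) by (apply (sol_periodic G V M LG Vb); auto).
assert (Hd : forall x, is_derive f x (H - V x - GM G M (f x))) by (apply (sol_deriv G V M LG Vb); auto).
assert (Hin : forall x0, H - V x0 - GM G M (f x0) = 0 -> Rabs (f x0) < M).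
{ intros x0 Hx0. specialize (HVb x0). apply Rabs_le_between in HVb.
  destruct (Rle_or_lt M (f x0)) as [Hge|Hlt].
  { pose proof (GM_hi G M (f x0) HM Hge). lra. }
  destruct (Rle_or_lt (f x0) (-M)) as [Hle|Hgt].
  { pose proof (GM_lo G M (f x0) HM Hle). lra. }
  apply Rabs_def1; lra. }
destruct (per_max f _ Hp Hd) as [xM [HxM HxM0]].
destruct (per_min f _ Hp Hd) as [xm [Hxm Hxm0]].
pose proof (Hin xM HxM0) as B1. pose proof (Hin xm Hxm0) as B2.
assert (Hall : forall x, Rabs (f x) < M).
{ intros x. specialize (HxM x). specialize (Hxm x).
  apply Rabs_def2 in B1. apply Rabs_def2 in B2. apply Rabs_def1; lra. }
split; auto. split; auto.
intros x. rewrite <- (GM_id G M (f x)) by (left; auto). apply Hd.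
Qed.

Lemma sq_small d r E t : 1 <= E -> 0 < r -> d^2 <= t^2 * E -> Rabs t < r / E -> Rabs d < r.
Proof.
intros HE Hr Hd Ht.
assert (Hrt : 0 <= Rabs t) by apply Rabs_pos.
assert (HtE : Rabs t * E < r) by (apply (Rmult_lt_reg_r (/E)); [apply Rinv_0_lt_compat; lra|];
  replace (Rabs t * E * / E) with (Rabs t) by (field; lra); exact Ht).
assert (t^2 = Rabs t * Rabs t) by (rewrite <- Rabs_mult; rewrite Rabs_pos_eq; [ring| nra]).
assert (t^2 * E <= (Rabs t * E) * (Rabs t * E)) by nra.
assert ((Rabs t * E) * (Rabs t * E) < r * r) by (apply Rmult_le_0_lt_compat; nra).
assert (Rabs d * Rabs d < r * r).
{ rewrite <- Rabs_mult. rewrite Rabs_pos_eq by nra. nra. }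
pose proof (Rabs_pos d). nra.
Qed.

Lemma P_cont_H G V M LG Vb a H0 : setting G V M LG Vb ->
  continuity_pt (fun H => sol G V M H a 1) H0.
Proof.
intros HS. apply cont_pt_of_continuous, cont_of_eps. intros eps Heps.
set (Ek := exp (2*(LG+1)+1)).
assert (HEk : 1 <= Ek). { pose proof HS as [_ [_ [HLG _]]]. unfold Ek. apply Rle_trans with (exp 0); [rewrite exp_0; lra| apply exp_le_mono; lra]. }
exists (Rmin 1 (eps*eps/Ek)). split.
{ apply Rmin_glb_lt; [lra|]. apply Rdiv_lt_0_compat; nra. }
intros z Hz.
assert (Hz1 : Rabs (z - H0) < 1) by (eapply Rlt_le_trans; [apply Hz| apply Rmin_l]).
assert (Hz2 : Rabs (z - H0) < eps*eps/Ek) by (eapply Rlt_le_trans; [apply Hz| apply Rmin_r]).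
pose proof (sol_gron G V M LG Vb z H0 a a 1 HS ltac:(lra) ltac:(lra)) as Gr. fold Ek in Gr.
rewrite Rminus_diag in Gr. simpl in Gr. rewrite Rmult_0_l, Rplus_0_l in Gr.
assert (Rabs (z - H0) * Ek < eps * eps).
{ apply (Rmult_lt_reg_r (/Ek)); [apply Rinv_0_lt_compat; lra|].
  replace (Rabs (z - H0) * Ek * / Ek) with (Rabs (z - H0)) by (field; lra). exact Hz2. }
set (d := sol G V M z a 1 - sol G V M H0 a 1) in *.
assert (d * (d * 1) < eps * eps) by lra.
pose proof (Rabs_pos d).
assert (Rabs d * Rabs d < eps * eps) by (rewrite <- Rabs_mult, Rabs_pos_eq; nra).
nra.
Qed.

Lemma root_exists G V M LG Vb a : setting G V M LG Vb -> Rabs a <= M ->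
  exists H, sol G V M H a 1 = a.
Proof.
intros HS Ha. pose proof HS as [_ [_ [_ [_ [_ [_ [HVb _]]]]]]].
destruct (Ranalysis5.IVT_interv (fun H => sol G V M H a 1 - a) (G a + V 0 - Vb - 1) (G a + V 0 + Vb + 1)) as [H [_ HH]].
- intros H0 _. apply continuity_pt_minus. apply (P_cont_H G V M LG Vb); auto. apply continuity_pt_const. intros u v; auto.
- lra.
- pose proof (sol_below G V M LG Vb (G a + V 0 - Vb - 1) a HS Ha ltac:(lra)). lra.
- pose proof (sol_above G V M LG Vb (G a + V 0 + Vb + 1) a HS Ha ltac:(lra)). lra.
- exists H. lra.
Qed.

Definition Hof G V M a := epsilon (inhabits 0) (fun H => sol G V M H a 1 = a).

Lemma Hof_spec G V M LG Vb a : setting G V M LG Vb -> Rabs a <= M -> sol G V M (Hof G V M a) a 1 = a.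
Proof.
intros HS Ha. unfold Hof. apply epsilon_spec.
apply (root_exists G V M LG Vb); auto.
Qed.

Lemma root_range G V M LG Vb H a : setting G V M LG Vb -> Rabs a <= M -> sol G V M H a 1 = a ->
  G a + V 0 - Vb <= H <= G a + V 0 + Vb.
Proof.
intros HS Ha H1. split.
- destruct (Rle_or_lt (G a + V 0 - Vb) H); auto. pose proof (sol_below G V M LG Vb H a HS Ha H0). lra.
- destruct (Rle_or_lt H (G a + V 0 + Vb)); auto. pose proof (sol_above G V M LG Vb H a HS Ha H0). lra.
Qed.

Lemma Hof_cont G V M LG Vb a : setting G V M LG Vb -> Rabs a + 1 <= M ->
  forall eps, 0 < eps -> exists del, 0 < del /\ forall a', Rabs (a' - a) < del ->
  Rabs (Hof G V M a' - Hof G V M a) < eps.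
Proof.
intros HS Ha eps Heps.
set (Ek := exp (2*(LG+1)+1)).
assert (HEk : 1 <= Ek). { pose proof HS as [_ [_ [HLG _]]]. unfold Ek. apply Rle_trans with (exp 0); [rewrite exp_0; lra| apply exp_le_mono; lra]. }
set (e := Rmin eps 1).
assert (He : 0 < e /\ e <= eps /\ e <= 1) by (unfold e, Rmin; destruct Rle_dec; lra).
set (H0 := Hof G V M a).
assert (Ha' : Rabs a <= M) by lra.
assert (HH0 : sol G V M H0 a 1 = a) by (apply (Hof_spec G V M LG Vb); auto).
set (up := sol G V M (H0 + e) a 1 - a).
set (dn := a - sol G V M (H0 - e) a 1).
assert (Hup : 0 < up).
{ unfold up. pose proof (sol_strict G V M LG Vb H0 (H0 + e) a 1 HS ltac:(lra) ltac:(lra)). lra. }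
assert (Hdn : 0 < dn).
{ unfold dn. pose proof (sol_strict G V M LG Vb (H0 - e) H0 a 1 HS ltac:(lra) ltac:(lra)). lra. }
set (gap := Rmin up dn).
assert (Hgap : 0 < gap /\ gap <= up /\ gap <= dn) by (unfold gap, Rmin; destruct Rle_dec; lra).
exists (Rmin 1 (gap / 2 / Ek)). split.
{ apply Rmin_glb_lt; [lra|]. apply Rdiv_lt_0_compat; lra. }
intros a' Hda.
assert (Hd1 : Rabs (a' - a) < 1) by (eapply Rlt_le_trans; [apply Hda| apply Rmin_l]).
assert (Hd2 : Rabs (a' - a) < gap / 2 / Ek) by (eapply Rlt_le_trans; [apply Hda| apply Rmin_r]).
assert (Hd3 : Rabs (a' - a) < gap / 2).
{ eapply Rlt_le_trans. apply Hd2. unfold Rdiv. rewrite <- (Rmult_1_r (gap * /2)) at 2.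
  apply Rmult_le_compat_l; [lra|]. rewrite <- Rinv_1. apply Rinv_le_contravar; lra. }
assert (Ha'M : Rabs a' <= M).
{ replace a' with (a + (a' - a)) by ring. eapply Rle_trans. apply Rabs_triang. lra. }
assert (Hcl : forall H, Rabs (sol G V M H a' 1 - sol G V M H a 1) < gap / 2).
{ intros H. apply (sq_small _ _ Ek (a' - a)); auto; [lra|].
  pose proof (sol_gron G V M LG Vb H H a' a 1 HS ltac:(lra)) as Gr.
  rewrite Rminus_diag, Rabs_R0, Rplus_0_r in Gr. fold Ek in Gr. apply Gr. lra. }
assert (A1 : a' < sol G V M (H0 + e) a' 1).
{ specialize (Hcl (H0 + e)). apply Rabs_def2 in Hcl. apply Rabs_def2 in Hd3. unfold up in *. lra. }
assert (A2 : sol G V M (H0 - e) a' 1 < a').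
{ specialize (Hcl (H0 - e)). apply Rabs_def2 in Hcl. apply Rabs_def2 in Hd3. unfold dn in *. lra. }
assert (HH' : sol G V M (Hof G V M a') a' 1 = a') by (apply (Hof_spec G V M LG Vb); auto).
apply Rabs_def1.
- destruct (Rlt_or_le (Hof G V M a' - H0) e) as [|Hge]; [lra|].
  pose proof (sol_mono G V M LG Vb (H0 + e) (Hof G V M a') a' 1 HS ltac:(lra) ltac:(lra)). lra.
- destruct (Rlt_or_le (- e) (Hof G V M a' - H0)) as [|Hge]; [lra|].
  pose proof (sol_mono G V M LG Vb (Hof G V M a') (H0 - e) a' 1 HS ltac:(lra) ltac:(lra)). lra.
Qed.

Definition mean_of G V M a := RInt (sol G V M (Hof G V M a) a) 0 1.

Lemma sol_cont G V M LG Vb H a : setting G V M LG Vb -> forall x, continuous (sol G V M H a) x.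
Proof. intros HS. apply (deriv_cont _ _ (sol_deriv G V M LG Vb H a HS)). Qed.

Lemma RInt_diff (f g : R -> R) : (forall x, continuous f x) -> (forall x, continuous g x) ->
  RInt f 0 1 - RInt g 0 1 = RInt (fun x => f x - g x) 0 1.
Proof.
intros Hf Hg.
assert (E1 : ex_RInt f 0 1) by (apply (ex_RInt_continuous (V:=R_CompleteNormedModule)); intros; apply Hf).
assert (E2 : ex_RInt g 0 1) by (apply (ex_RInt_continuous (V:=R_CompleteNormedModule)); intros; apply Hg).
pose proof (RInt_minus (V:=R_CompleteNormedModule) f g 0 1 E1 E2) as HR.
symmetry. exact HR.
Qed.

Lemma m_cont G V M LG Vb a : setting G V M LG Vb -> Rabs a + 1 <= M ->
  continuity_pt (mean_of G V M) a.
Proof.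
intros HS Ha. apply cont_pt_of_continuous, cont_of_eps. intros eps Heps.
set (Ek := exp (2*(LG+1)+1)).
assert (HEk : 1 <= Ek). { pose proof HS as [_ [_ [HLG _]]]. unfold Ek. apply Rle_trans with (exp 0); [rewrite exp_0; lra| apply exp_le_mono; lra]. }
set (eta := Rmin 1 (eps*eps/(16*Ek))).
assert (Heta : 0 < eta /\ eta <= 1 /\ eta <= eps*eps/(16*Ek)).
{ unfold eta, Rmin. destruct Rle_dec; split; try lra. apply Rdiv_lt_0_compat; nra. }
destruct (Hof_cont G V M LG Vb a HS Ha eta ltac:(lra)) as [dH [HdH HdHs]].
exists (Rmin eta dH). split; [apply Rmin_glb_lt; lra|].
intros a' Hda.
assert (Hd1 : Rabs (a' - a) < eta) by (eapply Rlt_le_trans; [apply Hda| apply Rmin_l]).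
assert (Hd2 : Rabs (a' - a) < dH) by (eapply Rlt_le_trans; [apply Hda| apply Rmin_r]).
specialize (HdHs a' Hd2).
assert (Hpt : forall x, 0 <= x <= 1 ->
  Rabs (sol G V M (Hof G V M a') a' x - sol G V M (Hof G V M a) a x) <= eps / 2).
{ intros x Hx.
  pose proof (sol_gron G V M LG Vb (Hof G V M a') (Hof G V M a) a' a x HS Hx ltac:(lra)) as Gr.
  fold Ek in Gr.
  set (d := sol G V M (Hof G V M a') a' x - sol G V M (Hof G V M a) a x) in *.
  assert ((a' - a)^2 <= Rabs (a' - a)).
  { assert ((a'-a)^2 = Rabs (a' - a) * Rabs (a' - a)) by (rewrite <- Rabs_mult, Rabs_pos_eq; [ring| apply Rle_0_sqr]).
    pose proof (Rabs_pos (a' - a)). assert (Rabs (a' - a) <= 1) by lra. nra. }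
  assert (((a' - a) ^ 2 + Rabs (Hof G V M a' - Hof G V M a)) * Ek <= (2 * eta) * Ek)
    by (apply Rmult_le_compat_r; lra).
  assert (2 * eta * Ek <= eps * eps / 8).
  { apply Rle_trans with (2 * (eps*eps/(16*Ek)) * Ek). apply Rmult_le_compat_r; lra.
    right. field. lra. }
  assert (Rabs d * Rabs d <= eps * eps / 4).
  { rewrite <- Rabs_mult, Rabs_pos_eq by apply Rle_0_sqr. simpl in Gr. nra. }
  pose proof (Rabs_pos d). nra. }
unfold mean_of.
rewrite (RInt_diff _ _ (sol_cont G V M LG Vb _ a' HS) (sol_cont G V M LG Vb _ a HS)).
eapply Rle_lt_trans. apply abs_RInt_le_const with (M := eps/2).
- lra.
- apply (ex_RInt_continuous (V:=R_CompleteNormedModule)). intros z _.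
  apply (continuous_minus (V:=R_NormedModule)); apply (sol_cont G V M LG Vb); auto.
- intros t Ht. apply Hpt. auto.
- lra.
Qed.

Lemma exists_mean G V M LG Vb A1 A2 theta : setting G V M LG Vb -> A1 < A2 ->
  Rabs A1 + 1 <= M -> Rabs A2 + 1 <= M ->
  mean_of G V M A1 < theta -> theta < mean_of G V M A2 ->
  exists a, A1 <= a <= A2 /\ mean_of G V M a = theta.
Proof.
intros HS H12 HA1 HA2 Hm1 Hm2.
destruct (Ranalysis5.IVT_interv (fun a => mean_of G V M a - theta) A1 A2) as [a [Ha Heq]].
- intros a Ha. apply continuity_pt_minus. apply (m_cont G V M LG Vb); auto.
  + pose proof (Rle_abs A1). pose proof (Rle_abs (-A1)). pose proof (Rle_abs A2). pose proof (Rle_abs (-A2)).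
    rewrite Rabs_Ropp in *.
    destruct (Rle_or_lt 0 a); [rewrite Rabs_pos_eq| rewrite Rabs_left]; lra.
  + apply continuity_pt_const. intros u v; auto.
- auto.
- lra.
- lra.
- exists a. split; auto. lra.
Qed.

Lemma mk_setting G V M Vb : is_C1 G -> 0 < M -> lipschitz V -> periodic1 V -> 0 <= Vb ->
  (forall x, Rabs (V x - V 0) <= Vb) -> exists LG, setting G V M LG Vb.
Proof.
intros HG HM HVl HVp HVb0 HVb. destruct (G_lip G HG M) as [LG [HLG HL]].
exists LG. repeat split; auto; apply HG.
Qed.

Lemma trunc_gsol G V M LG Vb a K : setting G V M LG Vb -> Rabs a <= M ->
  G a + 2 * Vb <= K -> K < G M -> K < G (-M) ->
  gsol G V (Hof G V M a) (sol G V M (Hof G V M a) a) /\ sol G V M (Hof G V M a) a 0 = a.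
Proof.
intros HS Ha HK HGM HGm.
pose proof (Hof_spec G V M LG Vb a HS Ha) as H1.
pose proof (root_range G V M LG Vb _ a HS Ha H1) as HR.
split.
- apply (sol_gsol G V M LG Vb _ a K HS H1); auto. lra.
- apply (sol_0 G V M LG Vb); auto.
Qed.

Lemma gsol_exists G V Vb : is_C1 G -> coercive G -> lipschitz V -> periodic1 V -> 0 <= Vb ->
  (forall x, Rabs (V x - V 0) <= Vb) -> forall a, exists H f, gsol G V H f /\ f 0 = a.
Proof.
intros HG HC HVl HVp HVb0 HVb a.
destruct (coerc_bound G HC (G a + 2 * Vb)) as [N [HN HNb]].
set (M := Rmax N (Rabs a) + 1).
assert (HM1 : N <= M /\ Rabs a <= M) by (unfold M; pose proof (Rmax_l N (Rabs a)); pose proof (Rmax_r N (Rabs a)); lra).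
destruct (mk_setting G V M Vb HG ltac:(lra) HVl HVp HVb0 HVb) as [LG HS].
exists (Hof G V M a), (sol G V M (Hof G V M a) a).
apply (trunc_gsol G V M LG Vb a (G a + 2 * Vb)); auto; try lra.
- apply HNb. rewrite Rabs_pos_eq; lra.
- apply HNb. rewrite Rabs_Ropp, Rabs_pos_eq; lra.
Qed.

Lemma gsol_ext2 G V Vb H f : (forall x, Rabs (V x - V 0) <= Vb) -> gsol G V H f ->
  exists xM xm, (forall x, f xm <= f x <= f xM) /\
    G (f xM) - 2 * Vb <= G (f xm) /\ G (f xm) - 2 * Vb <= G (f xM).
Proof.
intros HVb S. destruct (gsol_extremes G V H f S) as [xM [xm [B [E1 E2]]]].
exists xM, xm. split; auto.
pose proof (HVb xM) as A. pose proof (HVb xm) as B'.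
apply Rabs_le_between in A. apply Rabs_le_between in B'. lra.
Qed.

Lemma high_A G V Vb theta : is_C1 G -> coercive G -> lipschitz V -> periodic1 V -> 0 <= Vb ->
  (forall x, Rabs (V x - V 0) <= Vb) ->
  exists A2, 0 < A2 /\ forall H f, gsol G V H f -> f 0 = A2 -> theta < RInt f 0 1.
Proof.
intros HG HC HVl HVp HVb0 HVb.
destruct (gsol_exists G V Vb HG HC HVl HVp HVb0 HVb 0) as [H0 [f0 [S0 E0]]].
destruct (gsol_extremes G V H0 f0 S0) as [xM0 [xm0 [B0 _]]].
set (m0 := f0 xm0). set (th := Rmax theta m0).
destruct (continuity_ab_maj G m0 th) as [pM [HpM _]].
{ unfold th; apply Rmax_r. }
{ intros c _. apply cont_pt_of_continuous, (G_cont G HG). }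
destruct (coerc_bound G HC (G pM + 2 * Vb)) as [N [HN HNb]].
exists (N + 1). split; [lra|]. intros H f S Ef.
assert (Hord : forall x, f0 x < f x) by (apply (gsol_order G V H0 H); auto; lra).
destruct (gsol_ext2 G V Vb H f HVb S) as [xM [xm [B [R1 R2]]]].
assert (HfM : N + 1 <= f xM) by (rewrite <- Ef; apply B).
assert (G (f xM) > G pM + 2 * Vb) by (apply HNb; rewrite Rabs_pos_eq; lra).
assert (Hxm : th < f xm).
{ destruct (Rlt_or_le th (f xm)) as [|Hle]; auto.
  assert (G (f xm) <= G pM).
  { apply HpM. split; auto. specialize (Hord xm). pose proof (B0 xm). unfold m0 in *. lra. }
  lra. }
assert (Hth : theta <= th) by apply Rmax_l.
pose proof (mean_bounds f (f xm) (f xM) (gsol_cont G V H f S) B). lra.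
Qed.

Lemma low_A G V Vb theta : is_C1 G -> coercive G -> lipschitz V -> periodic1 V -> 0 <= Vb ->
  (forall x, Rabs (V x - V 0) <= Vb) ->
  exists A1, A1 < 0 /\ forall H f, gsol G V H f -> f 0 = A1 -> RInt f 0 1 < theta.
Proof.
intros HG HC HVl HVp HVb0 HVb.
destruct (gsol_exists G V Vb HG HC HVl HVp HVb0 HVb 0) as [H0 [f0 [S0 E0]]].
destruct (gsol_extremes G V H0 f0 S0) as [xM0 [xm0 [B0 _]]].
set (M0 := f0 xM0). set (th := Rmin theta M0).
destruct (continuity_ab_maj G th M0) as [pM [HpM _]].
{ unfold th; apply Rmin_r. }
{ intros c _. apply cont_pt_of_continuous, (G_cont G HG). }
destruct (coerc_bound G HC (G pM + 2 * Vb)) as [N [HN HNb]].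
exists (- (N + 1)). split; [lra|]. intros H f S Ef.
assert (Hord : forall x, f x < f0 x) by (apply (gsol_order G V H H0); auto; lra).
destruct (gsol_ext2 G V Vb H f HVb S) as [xM [xm [B [R1 R2]]]].
assert (Hfm : f xm <= - (N + 1)) by (rewrite <- Ef; apply B).
assert (G (f xm) > G pM + 2 * Vb) by (apply HNb; rewrite Rabs_left; lra).
assert (HxM : f xM < th).
{ destruct (Rlt_or_le (f xM) th) as [|Hle]; auto.
  assert (G (f xM) <= G pM).
  { apply HpM. split; auto. specialize (Hord xM). pose proof (B0 xM). unfold M0 in *. lra. }
  lra. }
assert (Hth : th <= theta) by apply Rmin_l.
pose proof (mean_bounds f (f xm) (f xM) (gsol_cont G V H f S) B). lra.
Qed.

Lemma main_exists G V theta : is_C1 G -> coercive G -> lipschitz V -> periodic1 V ->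
  exists H f, gsol G V H f /\ RInt f 0 1 = theta.
Proof.
intros HG HC HVl HVp.
destruct (V_bound V HVl HVp) as [Vb [HVb0 HVb]].
destruct (low_A G V Vb theta HG HC HVl HVp HVb0 HVb) as [A1 [HA1 Hlow]].
destruct (high_A G V Vb theta HG HC HVl HVp HVb0 HVb) as [A2 [HA2 Hhigh]].
destruct (continuity_ab_maj G A1 A2) as [pM [HpM _]].
{ lra. }
{ intros c _. apply cont_pt_of_continuous, (G_cont G HG). }
set (K := G pM + 2 * Vb).
destruct (coerc_bound G HC K) as [N [HN HNb]].
set (M := Rmax N (Rmax (Rabs A1 + 1) (Rabs A2 + 1))).
assert (HMs : N <= M /\ Rabs A1 + 1 <= M /\ Rabs A2 + 1 <= M).
{ unfold M. pose proof (Rmax_l N (Rmax (Rabs A1 + 1) (Rabs A2 + 1))).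
  pose proof (Rmax_r N (Rmax (Rabs A1 + 1) (Rabs A2 + 1))).
  pose proof (Rmax_l (Rabs A1 + 1) (Rabs A2 + 1)). pose proof (Rmax_r (Rabs A1 + 1) (Rabs A2 + 1)). lra. }
destruct (mk_setting G V M Vb HG ltac:(lra) HVl HVp HVb0 HVb) as [LG HS].
assert (HKM : K < G M) by (apply HNb; rewrite Rabs_pos_eq; lra).
assert (HKm : K < G (-M)) by (apply HNb; rewrite Rabs_Ropp, Rabs_pos_eq; lra).
assert (Hgs : forall a, A1 <= a <= A2 ->
  gsol G V (Hof G V M a) (sol G V M (Hof G V M a) a) /\ sol G V M (Hof G V M a) a 0 = a).
{ intros a Ha. apply (trunc_gsol G V M LG Vb a K); auto.
  - pose proof (Rle_abs A1). pose proof (Rle_abs (-A1)). pose proof (Rle_abs A2). pose proof (Rle_abs (-A2)).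
    rewrite Rabs_Ropp in *. destruct (Rle_or_lt 0 a); [rewrite Rabs_pos_eq| rewrite Rabs_left]; lra.
  - unfold K. pose proof (HpM a Ha). lra. }
destruct (Hgs A1 ltac:(lra)) as [S1 E1].
destruct (Hgs A2 ltac:(lra)) as [S2 E2].
pose proof (Hlow _ _ S1 E1) as L1. pose proof (Hhigh _ _ S2 E2) as L2.
destruct (exists_mean G V M LG Vb A1 A2 theta HS ltac:(lra) ltac:(lra) ltac:(lra) L1 L2) as [a [Ha Hm]].
exists (Hof G V M a), (sol G V M (Hof G V M a) a). split.
- apply Hgs; auto.
- exact Hm.
Qed.

Lemma cell_to_gsol G V theta H g : cell_solution G V theta H g -> gsol G V H g.
Proof.
intros [[Hd _] [Hp [_ Heq]]]. split; auto.
intros x. replace (H - V x - G (g x)) with (Derive g x) by (specialize (Heq x); lra).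
apply Derive_correct, Hd.
Qed.

Theorem lemma4p1 (G V : R -> R) :
  is_C1 G -> coercive G -> lipschitz V -> periodic1 V ->
  forall theta : R,
    exists (Hbar : R) (f : R -> R),
      cell_solution G V theta Hbar f /\
      (forall (H' : R) (g : R -> R), cell_solution G V theta H' g ->
         H' = Hbar /\ g = f).
Proof.
intros HG HC HVl HVp theta.
destruct (main_exists G V theta HG HC HVl HVp) as [H [f [S Hm]]].
assert (HD : forall x, Derive f x = H - V x - G (f x)).
{ intros x. apply is_derive_unique. apply S. }
exists H, f. split.
- split; [split|split; [apply S| split; auto]].
  + intros x. exists (H - V x - G (f x)). apply S.
  + intros x. apply (continuous_ext (fun x => H - V x - G (f x))).
    { intros t. symmetry. apply HD. }
    apply (continuous_minus (V:=R_NormedModule)).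
    * apply (continuous_minus (V:=R_NormedModule)). apply continuous_const.
      destruct HVl as [L HL]. apply (lip_cont V L HL).
    * apply (continuous_comp f G). apply (gsol_cont G V H f S). apply (G_cont G HG).
  + intros x. rewrite HD. ring.
- intros H' g Hg. pose proof (cell_to_gsol G V theta H' g Hg) as Sg.
  destruct Hg as [_ [_ [Hgm _]]].
  destruct (classic (exists x0, f x0 = g x0)) as [[x0 Hx0]|Hno].
  + destruct (touch G V H H' f g x0 HG S Sg Hx0) as [HH Hfg].
    split; auto. apply functional_extensionality. intros x. symmetry. auto.
  + exfalso.
    assert (Hne : forall x, f x <> g x) by (intros x Hx; apply Hno; exists x; auto).
    assert (Cf := gsol_cont G V H f S). assert (Cg := gsol_cont G V H' g Sg).
    destruct (Rtotal_order (f 0) (g 0)) as [Hl|[He|Hgt]].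
    * pose proof (no_touch_order f g Cf Cg Hne Hl) as O.
      pose proof (RInt_lt f g 0 1 ltac:(lra) (fun x _ => Cg x) (fun x _ => Cf x) (fun x _ => O x)). lra.
    * apply (Hne 0 He).
    * assert (Hne' : forall x, g x <> f x) by (intros x Hx; apply (Hne x); auto).
      pose proof (no_touch_order g f Cg Cf Hne' Hgt) as O.
      pose proof (RInt_lt g f 0 1 ltac:(lra) (fun x _ => Cf x) (fun x _ => Cg x) (fun x _ => O x)). lra.
Qed.
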